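(* Let $\Omega\subset\mathbb{C}$ be a simply connected domain, let $(g,\mathcal{P},\mathcal{Q})$ be a Weierstrass data of the first kind on $\Omega$, and let $\lambda\in\mathbb{R}$ be such that $1+i\lambda g(z)\neq0$ for all $z\in\Omega$. Set $g_\lambda:=\frac{g}{1+i\lambda g}$ and $\mathcal{P}_\lambda:=\mathcal{P}$. Then there exists a $\mathcal{C}^2$ function $\mathcal{Q}_\lambda:\Omega\to\mathbb{R}$ satisfying $$(\mathcal{Q}_\lambda)_z=\left(\frac1g+i\lambda\right)\left(g\,\mathcal{Q}_z-i\lambda\,\mathcal{P}_z\right),$$ and for any such $\mathcal{Q}_\lambda$ the triple $(g_\lambda,\mathcal{P}_\lambda,\mathcal{Q}_\lambda)$ is a Weierstrass data of the first kind on $\Omega$.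
   Context: $\Omega\subset\mathbb{R}^2\equiv\mathbb{C}$ has complex coordinate $z=u+iv$, and $\partial_z=\frac12(\partial_u-i\partial_v)$, $\partial_{\overline z}=\frac12(\partial_u+i\partial_v)$; subscripts denote partial derivatives. A Weierstrass data of the first kind on $\Omega$ is a triple $(g,\mathcal{P},\mathcal{Q})$ where $g:\Omega\to\mathbb{C}\setminus\{0\}$ and $\mathcal{P},\mathcal{Q}:\Omega\to\mathbb{R}$ are $\mathcal{C}^2$, satisfying $g_{\overline z}=0$, $\mathcal{P}_{z\overline z}=|g|^2\mathcal{Q}_{z\overline z}$, and $\mathcal{P}_z-|g|^2\mathcal{Q}_z\neq0$ at every point of $\Omega$. *)

(* Defs.v *)
From Stdlib Require Import Reals.
From Coquelicot Require Import Coquelicot.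

(* A point z = (u, v) of C = R^2; u = Re z, v = Im z. *)

Definition pu (f : C -> R) (z : C) : R :=
  Derive (fun t => f (t, Im z)) (Re z).
Definition pv (f : C -> R) (z : C) : R :=
  Derive (fun t => f (Re z, t)) (Im z).

Definition Cpu (F : C -> C) (z : C) : C :=
  (pu (fun w => Re (F w)) z, pu (fun w => Im (F w)) z).
Definition Cpv (F : C -> C) (z : C) : C :=
  (pv (fun w => Re (F w)) z, pv (fun w => Im (F w)) z).

Definition Dz (F : C -> C) (z : C) : C :=
  (/ 2 * (Cpu F z - Ci * Cpv F z))%C.
Definition Dzb (F : C -> C) (z : C) : C :=
  (/ 2 * (Cpu F z + Ci * Cpv F z))%C.

Definition RC (f : C -> R) : C -> C := fun z => RtoC (f z).

Definition C2R (Omega : C -> Prop) (f : C -> R) : Prop :=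
  forall z, Omega z ->
    ex_derive (fun t => f (t, Im z)) (Re z) /\
    ex_derive (fun t => f (Re z, t)) (Im z) /\
    ex_derive (fun t => pu f (t, Im z)) (Re z) /\
    ex_derive (fun t => pu f (Re z, t)) (Im z) /\
    ex_derive (fun t => pv f (t, Im z)) (Re z) /\
    ex_derive (fun t => pv f (Re z, t)) (Im z) /\
    continuous f z /\
    continuous (pu f) z /\ continuous (pv f) z /\
    continuous (pu (pu f)) z /\ continuous (pv (pu f)) z /\
    continuous (pu (pv f)) z /\ continuous (pv (pv f)) z.

Definition C2C (Omega : C -> Prop) (F : C -> C) : Prop :=
  C2R Omega (fun w => Re (F w)) /\ C2R Omega (fun w => Im (F w)).

Definition is_domain (Omega : C -> Prop) : Prop :=
  open Omega /\ (exists z, Omega z) /\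
  forall U V : C -> Prop, open U -> open V ->
    (forall z, Omega z -> U z \/ V z) ->
    (exists z, Omega z /\ U z) -> (exists z, Omega z /\ V z) ->
    exists z, Omega z /\ U z /\ V z.

(* Continuous maps on
   [0,1] resp. [0,1]^2 are represented by continuous maps on R resp. R^2
   (every continuous map on [0,1]^n extends continuously by clamping). *)
Definition simply_connected (Omega : C -> Prop) : Prop :=
  is_domain Omega /\
  forall gam : R -> C,
    (forall t, continuous gam t) ->
    (forall t, 0 <= t <= 1 -> Omega (gam t)) ->
    gam 0 = gam 1 ->
    exists H : C -> C,
      (forall p, continuous H p) /\
      (forall s t, 0 <= s <= 1 -> 0 <= t <= 1 -> Omega (H (s, t))) /\
      (forall s, 0 <= s <= 1 -> H (s, 0) = gam s) /\
      (forall s, 0 <= s <= 1 -> H (s, 1) = gam 0) /\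
      (forall t, 0 <= t <= 1 -> H (0, t) = gam 0 /\ H (1, t) = gam 0).

Definition WD1 (Omega : C -> Prop) (g : C -> C) (P Q : C -> R) : Prop :=
  C2C Omega g /\ C2R Omega P /\ C2R Omega Q /\
  forall z, Omega z ->
    g z <> 0%C /\
    Dzb g z = 0%C /\
    Dz (Dzb (RC P)) z = (RtoC (Cmod (g z) ^ 2) * Dz (Dzb (RC Q)) z)%C /\
    (Dz (RC P) z - RtoC (Cmod (g z) ^ 2) * Dz (RC Q) z)%C <> 0%C.

(* Main.v *)
Require Import Defs.
From Stdlib Require Import Reals Lra Lia Psatz ClassicalEpsilon FunctionalExtensionality Classical.
From Coquelicot Require Import Coquelicot.
Open Scope R_scope.

Definition sq (c : C) (r : R) (w : C) : Prop :=
  Rabs (Re w - Re c) < r /\ Rabs (Im w - Im c) < r.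

Lemma ball_sq (c w : C) (r : R) : ball c r w <-> sq c r w.
Proof.
  destruct c as [x y], w as [u v]. unfold ball; simpl. unfold prod_ball; simpl.
  unfold ball; simpl. unfold AbsRing_ball, abs, minus, plus, opp; simpl.
  unfold sq; simpl. tauto.
Qed.

Lemma open_sq (Omega : C -> Prop) (z : C) : open Omega -> Omega z ->
  exists r, 0 < r /\ forall w, sq z r w -> Omega w.
Proof.
  intros Ho Hz. destruct (Ho z Hz) as [e He].
  exists e. split. apply cond_pos. intros w Hw. apply He. apply ball_sq. exact Hw.
Qed.

Lemma locally_sq (z : C) (P : C -> Prop) : locally z P <-> exists r, 0 < r /\ forall w, sq z r w -> P w.
Proof.
  split.
  - intros [e He]. exists e. split. apply cond_pos. intros w Hw. apply He, ball_sq, Hw.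
  - intros [r [Hr H]]. exists (mkposreal r Hr). intros w Hw. apply H, ball_sq, Hw.
Qed.

Lemma open_locally (Omega : C -> Prop) (z : C) : open Omega -> Omega z -> locally z Omega.
Proof. intros Ho Hz. apply Ho, Hz. Qed.

Lemma continuous_Re_comp (F : C -> C) (z : C) : continuous F z -> continuous (fun w => Re (F w)) z.
Proof.
  intros H. apply (continuous_comp F fst). exact H.
  destruct (F z). apply continuous_fst.
Qed.

Lemma continuous_Im_comp (F : C -> C) (z : C) : continuous F z -> continuous (fun w => Im (F w)) z.
Proof.
  intros H. apply (continuous_comp F snd). exact H.
  destruct (F z). apply continuous_snd.
Qed.

Lemma continuous_pair_C (f g : C -> R) (z : C) : continuous f z -> continuous g z ->
  continuous (fun w => (f w, g w) : C) z.
Proof.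
  intros Hf Hg.
  apply (continuous_comp_2 f g (fun a b => (a, b) : C)); auto.
  apply continuous_ext with (f := fun x : R * R => x).
  intros [a b]; reflexivity. apply continuous_id.
Qed.

Lemma continuous_C_iff (F : C -> C) (z : C) : continuous F z <->
  continuous (fun w => Re (F w)) z /\ continuous (fun w => Im (F w)) z.
Proof.
  split. intros H; split; [apply continuous_Re_comp|apply continuous_Im_comp]; auto.
  intros [H1 H2]. eapply continuous_ext. 2: apply (continuous_pair_C _ _ _ H1 H2).
  intros w. simpl. destruct (F w); reflexivity.
Qed.

Lemma continuous_line_u (f : C -> R) (z : C) :
  continuous f z -> continuous (fun t => f (t, Im z)) (Re z).
Proof.
  intros H. apply (continuous_comp (fun t => (t, Im z) : C) f).
  apply (continuous_comp_2 (fun t => t) (fun _ => Im z) (fun a b => (a,b) : C)).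
  apply continuous_id. apply continuous_const.
  apply continuous_ext with (f := fun x : R * R => x). intros [a b]; reflexivity. apply continuous_id.
  destruct z; exact H.
Qed.

Lemma continuous_line_v (f : C -> R) (z : C) :
  continuous f z -> continuous (fun t => f (Re z, t)) (Im z).
Proof.
  intros H. apply (continuous_comp (fun t => (Re z, t) : C) f).
  apply (continuous_comp_2 (fun _ => Re z) (fun t => t) (fun a b => (a,b) : C)).
  apply continuous_const. apply continuous_id.
  apply continuous_ext with (f := fun x : R * R => x). intros [a b]; reflexivity. apply continuous_id.
  destruct z; exact H.
Qed.

Lemma continuous_2d_pt (f : C -> R) (x y : R) :
  continuous f (x, y) -> continuity_2d_pt (fun u v => f (u, v)) x y.
Proof.
  intros H. apply continuity_2d_pt_filterlim.
  eapply filterlim_ext. 2: exact H. intros [a b]; reflexivity.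
Qed.


Lemma cU_plus {U : UniformSpace} (f g : U -> R) x : continuous f x -> continuous g x -> continuous (fun y => f y + g y) x.
Proof. intros H1 H2. exact (@continuous_plus U R_AbsRing R_NormedModule f g x H1 H2). Qed.
Lemma cU_mult {U : UniformSpace} (f g : U -> R) x : continuous f x -> continuous g x -> continuous (fun y => f y * g y) x.
Proof. intros H1 H2. exact (@continuous_mult U R_AbsRing f g x H1 H2). Qed.
Lemma cU_opp {U : UniformSpace} (f : U -> R) x : continuous f x -> continuous (fun y => - f y) x.
Proof. intros H1. exact (@continuous_opp U R_AbsRing R_NormedModule f x H1). Qed.
Lemma cU_minus {U : UniformSpace} (f g : U -> R) x : continuous f x -> continuous g x -> continuous (fun y => f y - g y) x.
Proof. intros H1 H2. apply cU_plus; auto. apply cU_opp; auto. Qed.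
Lemma cU_const {U : UniformSpace} (c : R) (x : U) : continuous (fun _ => c) x.
Proof. exact (@continuous_const U R_UniformSpace c x). Qed.
Lemma cU_inv {U : UniformSpace} (f : U -> R) x : continuous f x -> f x <> 0 -> continuous (fun y => / f y) x.
Proof. intros H1 H2. apply (continuous_comp f Rinv). auto. apply continuous_Rinv. auto. Qed.
Lemma cU_abs {U : UniformSpace} (f : U -> R) x : continuous f x -> continuous (fun y => Rabs (f y)) x.
Proof. intros H1. apply (continuous_comp f Rabs). auto. apply continuous_Rabs. Qed.
Lemma cR_id (x : R) : continuous (fun y : R => y) x.
Proof. exact (@continuous_id R_UniformSpace x). Qed.
Lemma cU_ext {U : UniformSpace} (f g : U -> R) x : (forall y, f y = g y) -> continuous f x -> continuous g x.
Proof. intros H. apply continuous_ext. auto. Qed.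

Definition HPab (Omega : C -> Prop) (a b : C -> R) : Prop := forall z, Omega z ->
  continuous a z /\ continuous b z /\ ex_derive (fun t => b (t, Im z)) (Re z) /\
  continuous (pu b) z /\ is_derive (fun t => a (Re z, t)) (Im z) (pu b z).

Definition Dl (a b : C -> R) (p q : C) : R :=
  RInt (fun t => a (t, Im p)) (Re p) (Re q) + RInt (fun s => b (Re q, s)) (Im p) (Im q).

Lemma seg_in (a b c r s : R) : Rabs (a - c) < r -> Rabs (b - c) < r ->
  Rmin a b <= s <= Rmax a b -> Rabs (s - c) < r.
Proof.
  intros H1 H2 H3. unfold Rmin, Rmax in H3. destruct (Rle_dec a b);
  revert H1 H2; unfold Rabs; repeat destruct Rcase_abs; lra.
Qed.

Lemma near_in (a c r : R) : Rabs (a - c) < r -> exists e, 0 < e /\ forall t, Rabs (t - a) < e -> Rabs (t - c) < r.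
Proof.
  intros H. exists (r - Rabs (a - c)). split. lra. intros t Ht.
  revert H Ht; unfold Rabs; repeat destruct Rcase_abs; lra.
Qed.

Lemma locally_R (x : R) (P : R -> Prop) (e : R) : 0 < e -> (forall t, Rabs (t - x) < e -> P t) -> locally x P.
Proof.
  intros He H. exists (mkposreal e He). intros t Ht. apply H. exact Ht.
Qed.

Ltac segt := match goal with H : Rmin ?a ?b <= ?s <= Rmax ?a ?b |- Rabs (?s - ?c) < ?r =>
  apply (seg_in a b c r s); [assumption|assumption|exact H] end.

Section Sq.
Variables (Omega : C -> Prop) (a b : C -> R).
Hypothesis HP : HPab Omega a b.
Variables (c : C) (r : R).
Hypothesis Hsq : forall w, sq c r w -> Omega w.

Lemma Hsq2 (x y : R) : Rabs (x - Re c) < r -> Rabs (y - Im c) < r -> Omega (x, y).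
Proof. intros; apply Hsq; split; simpl; auto. Qed.

Lemma ex_RInt_v (x y1 y2 : R) : Rabs (x - Re c) < r -> Rabs (y1 - Im c) < r -> Rabs (y2 - Im c) < r ->
  ex_RInt (fun s => b (x, s)) y1 y2.
Proof.
  intros H1 H2 H3. apply (@ex_RInt_continuous R_CompleteNormedModule). intros s Hs.
  assert (Omega (x, s)) by (apply Hsq2; first [assumption | segt | apply Ht; assumption]).
  destruct (HP _ H) as [_ [Hb _]]. apply (continuous_line_v b (x, s)). exact Hb.
Qed.

Lemma ex_RInt_u (y x1 x2 : R) : Rabs (y - Im c) < r -> Rabs (x1 - Re c) < r -> Rabs (x2 - Re c) < r ->
  ex_RInt (fun t => a (t, y)) x1 x2.
Proof.
  intros H1 H2 H3. apply (@ex_RInt_continuous R_CompleteNormedModule). intros s Hs.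
  assert (Omega (s, y)) by (apply Hsq2; first [assumption | segt | apply Ht; assumption]).
  destruct (HP _ H) as [Ha _]. apply (continuous_line_u a (s, y)). exact Ha.
Qed.

Lemma deriv_RInt_u (y x1 x : R) : Rabs (y - Im c) < r -> Rabs (x1 - Re c) < r -> Rabs (x - Re c) < r ->
  is_derive (fun t => RInt (fun s => a (s, y)) x1 t) x (a (x, y)).
Proof.
  intros H1 H2 H3. destruct (near_in _ _ _ H3) as [e [He Ht]].
  apply (@is_derive_RInt R_NormedModule (fun s => a (s, y)) (fun t => RInt (fun s => a (s, y)) x1 t) x1).
  apply (locally_R x _ e He). intros t Hte. apply (@RInt_correct R_CompleteNormedModule). apply ex_RInt_u; auto.
  assert (Omega (x, y)) by (apply Hsq2; auto).
  destruct (HP _ H) as [Ha _]. apply (continuous_line_u a (x, y)). exact Ha.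
Qed.

Lemma deriv_RInt_v (x y1 y : R) : Rabs (x - Re c) < r -> Rabs (y1 - Im c) < r -> Rabs (y - Im c) < r ->
  is_derive (fun t => RInt (fun s => b (x, s)) y1 t) y (b (x, y)).
Proof.
  intros H1 H2 H3. destruct (near_in _ _ _ H3) as [e [He Ht]].
  apply (@is_derive_RInt R_NormedModule (fun s => b (x, s)) (fun t => RInt (fun s => b (x, s)) y1 t) y1).
  apply (locally_R y _ e He). intros t Hte. apply (@RInt_correct R_CompleteNormedModule). apply ex_RInt_v; auto.
  assert (Omega (x, y)) by (apply Hsq2; auto).
  destruct (HP _ H) as [_ [Hb _]]. apply (continuous_line_v b (x, y)). exact Hb.
Qed.

Lemma deriv_param (x y : R) : Rabs (x - Re c) < r -> Rabs (y - Im c) < r ->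
  is_derive (fun t => RInt (fun s => b (t, s)) (Im c) y) x (a (x, y) - a (x, Im c)).
Proof.
  intros H1 H2. assert (Hc : Rabs (Im c - Im c) < r).
  { replace (Im c - Im c) with 0 by ring. rewrite Rabs_R0. eapply Rle_lt_trans. apply Rabs_pos. exact H2. }
  destruct (near_in _ _ _ H1) as [e [He Ht]].
  assert (Hv : RInt (fun s => Derive (fun u => b (u, s)) x) (Im c) y = a (x, y) - a (x, Im c)).
  { apply is_RInt_unique.
    apply (@is_RInt_derive R_CompleteNormedModule (fun s => a (x, s)) (fun s => Derive (fun u => b (u, s)) x)).
    - intros s Hs. assert (Omega (x, s)) by (apply Hsq2; first [assumption | segt | apply Ht; assumption]).
      destruct (HP _ H) as [_ [_ [_ [_ Hd]]]]. exact Hd.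
    - intros s Hs. assert (Omega (x, s)) by (apply Hsq2; first [assumption | segt | apply Ht; assumption]).
      destruct (HP _ H) as [_ [_ [_ [Hc2 _]]]]. apply (continuous_line_v (pu b) (x, s)). exact Hc2. }
  rewrite <- Hv.
  apply (is_derive_RInt_param (fun u s => b (u, s))).
  - apply (locally_R x _ e He). intros t Hte s Hs.
    assert (Omega (t, s)) by (apply Hsq2; first [assumption | segt | apply Ht; assumption]).
    destruct (HP _ H) as [_ [_ [Hd _]]]. exact Hd.
  - intros s Hs. assert (Omega (x, s)) by (apply Hsq2; first [assumption | segt | apply Ht; assumption]).
    destruct (HP _ H) as [_ [_ [_ [Hc2 _]]]]. apply (continuous_2d_pt (pu b) x s). exact Hc2.
  - apply (locally_R x _ e He). intros t Hte. apply ex_RInt_v; auto.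
Qed.

Lemma sq_deriv (w : C) : sq c r w ->
  is_derive (fun t => Dl a b c (t, Im w)) (Re w) (a w) /\
  is_derive (fun t => Dl a b c (Re w, t)) (Im w) (b w).
Proof.
  destruct w as [x y]. intros [H1 H2]; simpl in *.
  assert (Hc : Rabs (Im c - Im c) < r).
  { replace (Im c - Im c) with 0 by ring. rewrite Rabs_R0. eapply Rle_lt_trans. apply Rabs_pos. exact H2. }
  assert (Hc' : Rabs (Re c - Re c) < r).
  { replace (Re c - Re c) with 0 by ring. rewrite Rabs_R0. eapply Rle_lt_trans. apply Rabs_pos. exact H2. }
  unfold Dl; simpl. split.
  - eapply is_derive_ext. intros t; reflexivity.
    replace (a (x, y)) with (a (x, Im c) + (a (x, y) - a (x, Im c))) by ring.
    apply (is_derive_plus (fun t => RInt (fun t0 => a (t0, Im c)) (Re c) t)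
                          (fun t => RInt (fun s => b (t, s)) (Im c) y)).
    apply deriv_RInt_u; auto. apply deriv_param; auto.
  - replace (b (x, y)) with (0 + b (x, y)) by ring.
    apply (is_derive_plus (fun _ => RInt (fun t0 => a (t0, Im c)) (Re c) x)
                          (fun t => RInt (fun s => b (x, s)) (Im c) t)).
    apply (@is_derive_const R_AbsRing R_NormedModule). apply deriv_RInt_v; auto.
Qed.

Lemma Dl_sq (p q : C) : sq c r p -> sq c r q -> Dl a b p q = Dl a b c q - Dl a b c p.
Proof.
  destruct p as [xp yp], q as [xq yq]. intros [Hp1 Hp2] [Hq1 Hq2]; simpl in *.
  unfold Dl at 1; simpl.
  assert (E1 : RInt (fun t => a (t, yp)) xp xq = Dl a b c (xq, yp) - Dl a b c (xp, yp)).
  { apply is_RInt_unique. apply (@is_RInt_derive R_CompleteNormedModule (fun t => Dl a b c (t, yp)) (fun t => a (t, yp))).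
    - intros t Ht. assert (sq c r (t, yp)) by (split; simpl; first [assumption | segt | apply Ht; assumption]).
      apply (sq_deriv _ H).
    - intros t Ht. assert (sq c r (t, yp)) by (split; simpl; first [assumption | segt | apply Ht; assumption]).
      destruct (HP _ (Hsq _ H)) as [Ha _]. apply (continuous_line_u a (t, yp)). exact Ha. }
  assert (E2 : RInt (fun s => b (xq, s)) yp yq = Dl a b c (xq, yq) - Dl a b c (xq, yp)).
  { apply is_RInt_unique. apply (@is_RInt_derive R_CompleteNormedModule (fun t => Dl a b c (xq, t)) (fun t => b (xq, t))).
    - intros t Ht. assert (sq c r (xq, t)) by (split; simpl; first [assumption | segt | apply Ht; assumption]).
      apply (sq_deriv _ H).
    - intros t Ht. assert (sq c r (xq, t)) by (split; simpl; first [assumption | segt | apply Ht; assumption]).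
      destruct (HP _ (Hsq _ H)) as [_ [Hb _]]. apply (continuous_line_v b (xq, t)). exact Hb. }
  rewrite E1, E2. ring.
Qed.

End Sq.

Lemma Dl_refl (a b : C -> R) (p : C) : Dl a b p p = 0.
Proof. unfold Dl. rewrite !RInt_point. unfold zero; simpl. ring. Qed.

Fixpoint csum (f : nat -> R) (n : nat) : R :=
  match n with O => 0 | S m => csum f m + f m end.

Lemma csum_ext (f g : nat -> R) n : (forall i, (i < n)%nat -> f i = g i) -> csum f n = csum g n.
Proof. induction n; simpl; intros H; auto. rewrite IHn by (intros; apply H; lia). rewrite H by lia. auto. Qed.

Lemma csum_tele (v : nat -> R) n : csum (fun i => v i - v (S i)) n = v O - v n.
Proof. induction n; simpl. ring. rewrite IHn. ring. Qed.

Lemma csum_zero (f : nat -> R) n : (forall i, (i < n)%nat -> f i = 0) -> csum f n = 0.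
Proof. intros H. rewrite (csum_ext f (fun _ => 0)) by auto. clear H. induction n; simpl; auto. rewrite IHn; ring. Qed.

Lemma csum_add (f : nat -> R) a b : csum f (a + b) = csum f a + csum (fun l => f (a + l)%nat) b.
Proof. induction b; simpl. rewrite Nat.add_0_r. ring. rewrite Nat.add_succ_r. simpl. rewrite IHb. ring. Qed.

Lemma csum_blocks (f : nat -> R) n M : csum f (n * M) = csum (fun k => csum (fun l => f (k * M + l)%nat) M) n.
Proof. induction n; simpl. auto. rewrite Nat.add_comm, csum_add, IHn. auto. Qed.

Definition clamp (x : R) : R := let y := (1 + x - Rabs (1 - x)) / 2 in (y + Rabs y) / 2.

Lemma clamp_1 x : 1 <= x -> clamp x = 1.
Proof. intros H. unfold clamp. unfold Rabs; repeat destruct Rcase_abs; lra. Qed.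
Lemma clamp_0 x : x <= 0 -> clamp x = 0.
Proof. intros H. unfold clamp. unfold Rabs; repeat destruct Rcase_abs; lra. Qed.
Lemma clamp_id x : 0 <= x <= 1 -> clamp x = x.
Proof. intros H. unfold clamp. unfold Rabs; repeat destruct Rcase_abs; lra. Qed.

Lemma continuous_R_ext (f g : R -> R) x : (forall t, f t = g t) -> continuous f x -> continuous g x.
Proof. intros H. apply continuous_ext. auto. Qed.

Lemma clamp_cont (f : R -> R) x : continuous f x -> continuous (fun t => clamp (f t)) x.
Proof.
  intros Hf. unfold clamp.
  assert (Hy : continuous (fun t => (1 + f t - Rabs (1 - f t)) / 2) x).
  { apply cU_mult. apply cU_minus. apply cU_plus. apply cU_const. auto.
    apply cU_abs. apply cU_minus. apply cU_const. auto. apply cU_const. }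
  apply cU_mult. apply cU_plus. auto. apply cU_abs. auto. apply cU_const.
Qed.

Fixpoint gs (x : nat -> R) (N : R) (m : nat) (t : R) : R :=
  match m with
  | O => x O
  | S j => gs x N j t + clamp (N * t - INR j) * (x (S j) - x j)
  end.

Lemma gs_cont x N m t : continuous (gs x N m) t.
Proof.
  induction m; simpl. apply cU_const.
  apply cU_plus. auto. apply cU_mult. apply clamp_cont.
  apply cU_minus. apply cU_mult. apply cU_const. apply cR_id. apply cU_const.
  apply cU_const.
Qed.


Lemma continuous_pair_U {U : UniformSpace} (f g : U -> R) (z : U) : continuous f z -> continuous g z ->
  continuous (fun w => (f w, g w) : C) z.
Proof.
  intros Hf Hg.
  apply (continuous_comp_2 f g (fun a b => (a, b) : C)); auto.
  apply continuous_ext with (f := fun x : R * R => x).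
  intros [a b]; reflexivity. apply continuous_id.
Qed.

Lemma conv_in (x1 x2 c r th : R) : Rabs (x1 - c) < r -> Rabs (x2 - c) < r -> 0 <= th <= 1 ->
  Rabs (x1 + th * (x2 - x1) - c) < r.
Proof.
  intros H1 H2 H3.
  replace (x1 + th * (x2 - x1) - c) with ((1 - th) * (x1 - c) + th * (x2 - c)) by ring.
  eapply Rle_lt_trans. apply Rabs_triang. rewrite !Rabs_mult.
  rewrite (Rabs_right (1 - th)) by lra. rewrite (Rabs_right th) by lra.
  destruct (Req_dec th 0). subst. lra.
  destruct (Req_dec th 1). subst. lra. nra.
Qed.

Lemma exists_k (N : nat) (x : R) : (1 <= N)%nat -> 0 <= x <= INR N ->
  exists k, (k < N)%nat /\ INR k <= x <= INR k + 1.
Proof.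
  intros HN. induction N. lia. intros Hx.
  destruct (Nat.eq_dec N 0). subst. exists O. split. lia. simpl in *. lra.
  destruct (Rle_dec x (INR N)).
  - destruct IHN as [k [Hk1 Hk2]]. lia. lra. exists k. split; auto.
  - exists N. rewrite S_INR in Hx. split. lia. lra.
Qed.

Definition link (Omega : C -> Prop) (p q : C) : Prop :=
  exists c r, 0 < r /\ (forall w, sq c r w -> Omega w) /\ sq c r p /\ sq c r q.

Lemma link_sym Omega p q : link Omega p q -> link Omega q p.
Proof. intros [c [r [H1 [H2 [H3 H4]]]]]. exists c, r. auto. Qed.
Lemma gs_val x N t k m : INR k <= N * t <= INR k + 1 ->
  gs x N m t = if (m <=? k)%nat then x m else x k + (N * t - INR k) * (x (S k) - x k).
Proof.
  intros Hk. induction m. simpl. auto.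
  cbn [gs]. rewrite IHm. destruct (Nat.leb_spec m k); destruct (Nat.leb_spec (S m) k).
  - rewrite clamp_1. ring. apply le_INR in H0. rewrite S_INR in H0. lra.
  - assert (m = k) by lia. subst. rewrite clamp_id by lra. ring.
  - lia.
  - rewrite clamp_0. ring. assert (k + 1 <= m)%nat by lia. apply le_INR in H1. rewrite plus_INR in H1. simpl in H1. lra.
Qed.

Definition gam (n : nat) (p : nat -> C) (t : R) : C :=
  (gs (fun k => Re (p k)) (INR n) n t, gs (fun k => Im (p k)) (INR n) n t).

Lemma gam_val n p t k : (k < n)%nat -> INR k <= INR n * t <= INR k + 1 ->
  gam n p t = (Re (p k) + (INR n * t - INR k) * (Re (p (S k)) - Re (p k)),
               Im (p k) + (INR n * t - INR k) * (Im (p (S k)) - Im (p k))).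
Proof.
  intros H1 H2. unfold gam. rewrite !(gs_val _ _ _ k) by auto.
  destruct (Nat.leb_spec n k). lia. auto.
Qed.

Lemma gam_cont n p t : continuous (gam n p) t.
Proof. apply continuous_pair_U; apply gs_cont. Qed.

Lemma in_seg c r p q th : sq c r p -> sq c r q -> 0 <= th <= 1 ->
  sq c r (Re p + th * (Re q - Re p), Im p + th * (Im q - Im p)).
Proof. intros [H1 H2] [H3 H4] H5. split; simpl; apply conv_in; auto. Qed.

Section Loop.
Variables (Omega : C -> Prop) (a b : C -> R).
Hypothesis HP : HPab Omega a b.
Hypothesis Ho : open Omega.

Lemma Dl_tri c r p q s : (forall w, sq c r w -> Omega w) -> sq c r p -> sq c r q -> sq c r s ->
  Dl a b p q + Dl a b q s = Dl a b p s.
Proof.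
  intros Hs H1 H2 H3. rewrite (Dl_sq Omega a b HP c r Hs p q), (Dl_sq Omega a b HP c r Hs q s),
    (Dl_sq Omega a b HP c r Hs p s) by auto. ring.
Qed.

Lemma Dl_anti p q : link Omega p q -> Dl a b q p = - Dl a b p q.
Proof.
  intros [c [r [_ [Hs [H1 H2]]]]]. rewrite (Dl_sq Omega a b HP c r Hs p q), (Dl_sq Omega a b HP c r Hs q p) by auto. ring.
Qed.

Lemma unif_sq (H : C -> C) : (forall p, continuous H p) ->
  (forall s t, 0 <= s <= 1 -> 0 <= t <= 1 -> Omega (H (s, t))) ->
  exists d, 0 < d /\ forall s t h, 0 <= s -> s + h <= 1 -> 0 <= t -> t + h <= 1 -> 0 <= h < d ->
    exists c r, 0 < r /\ (forall w, sq c r w -> Omega w) /\ sq c r (H (s, t)) /\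
      sq c r (H (s + h, t)) /\ sq c r (H (s, t + h)) /\ sq c r (H (s + h, t + h)).
Proof.
  intros Hc Hin.
  assert (Hex : forall s t : R, exists d : R, 0 < d /\ (0 <= s <= 1 -> 0 <= t <= 1 ->
     exists c r, 0 < r /\ (forall w, sq c r w -> Omega w) /\
       forall s' t', Rabs (s' - s) < d -> Rabs (t' - t) < d -> sq c r (H (s', t')))).
  { intros s t. destruct (classic (0 <= s <= 1 /\ 0 <= t <= 1)) as [[Hs Ht]|Hn].
    - destruct (open_sq Omega (H (s, t)) Ho (Hin s t Hs Ht)) as [r [Hr Hsq]].
      pose proof (Hc (s, t)) as Hct. unfold continuous in Hct.
      rewrite filterlim_locally in Hct. specialize (Hct (mkposreal r Hr)).
      apply locally_sq in Hct. destruct Hct as [d [Hd Hd2]].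
      exists d. split. auto. intros _ _. exists (H (s, t)), r. split; auto. split; auto.
      intros s' t' H1 H2. apply ball_sq. apply Hd2. split; simpl; auto.
    - exists 1. split. lra. intros H1 H2. exfalso. auto. }
  set (df := fun s t => proj1_sig (constructive_indefinite_description _ (Hex s t))).
  assert (Hdf : forall s t, 0 < df s t /\ (0 <= s <= 1 -> 0 <= t <= 1 ->
     exists c r, 0 < r /\ (forall w, sq c r w -> Omega w) /\
       forall s' t', Rabs (s' - s) < df s t -> Rabs (t' - t) < df s t -> sq c r (H (s', t')))).
  { intros s t. unfold df. destruct (constructive_indefinite_description _ (Hex s t)). simpl. auto. }
  assert (Hpos : forall x : Compactness.Tn 2 R, 0 < df (fst x) (fst (snd x)) / 2).
  { intros x. destruct (Hdf (fst x) (fst (snd x))). lra. }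
  set (delta := fun x : Compactness.Tn 2 R => mkposreal _ (Hpos x)).
  destruct (compactness_value 2 (0, (0, tt)) (1, (1, tt)) delta) as [d Hd].
  exists d. split. apply cond_pos.
  intros s t h Hs1 Hs2 Ht1 Ht2 Hh.
  assert (Hb : bounded_n 2 (0, (0, tt)) (1, (1, tt)) (s, (t, tt))).
  { simpl. repeat split; lra. }
  specialize (Hd _ Hb). apply NNPP. intros Hneg. apply Hd. intros [[s0 [t0 []]] [Hb0 [Hcl Hdd]]].
  apply Hneg. simpl in Hb0, Hcl, Hdd. destruct Hcl as [Hc1 [Hc2 _]].
  destruct Hb0 as [Hb1 [Hb2 _]].
  destruct (Hdf s0 t0) as [Hpos0 Hsq0]. destruct (Hsq0 Hb1 Hb2) as [c [r [Hr [Hsub Hall]]]].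
  exists c, r. split; auto. split; auto.
  assert (Hd' : d <= df s0 t0 / 2) by exact Hdd.
  revert Hc1 Hc2; intros Hc1 Hc2.
  repeat split; apply Hall; revert Hc1 Hc2; unfold Rabs; repeat destruct Rcase_abs; lra.
Qed.

End Loop.

Lemma csum_minus (f g : nat -> R) n : csum (fun i => f i - g i) n = csum f n - csum g n.
Proof. induction n; simpl. ring. rewrite IHn. ring. Qed.

Section Loop2.
Variables (Omega : C -> Prop) (a b : C -> R).
Hypothesis HP : HPab Omega a b.
Hypothesis Ho : open Omega.
Hypothesis HSC : forall gam : R -> C,
    (forall t, continuous gam t) ->
    (forall t, 0 <= t <= 1 -> Omega (gam t)) ->
    gam 0 = gam 1 ->
    exists H : C -> C,
      (forall p, continuous H p) /\
      (forall s t, 0 <= s <= 1 -> 0 <= t <= 1 -> Omega (H (s, t))) /\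
      (forall s, 0 <= s <= 1 -> H (s, 0) = gam s) /\
      (forall s, 0 <= s <= 1 -> H (s, 1) = gam 0) /\
      (forall t, 0 <= t <= 1 -> H (0, t) = gam 0 /\ H (1, t) = gam 0).

Lemma loop_zero n p : (forall k, (k < n)%nat -> link Omega (p k) (p (S k))) -> p O = p n ->
  csum (fun k => Dl a b (p k) (p (S k))) n = 0.
Proof.
  intros Hl Hloop. destruct n as [|m]. reflexivity.
  set (n := S m).
  assert (Hn : 0 < INR n) by (apply lt_0_INR; unfold n; lia).
  assert (Hg0 : gam n p 0 = p O).
  { rewrite (gam_val n p 0 0). destruct (p O); simpl; f_equal; ring. unfold n; lia.
    simpl. lra. }
  assert (Hg1 : gam n p 1 = p n).
  { rewrite (gam_val n p 1 m). unfold n. rewrite S_INR. destruct (p (S m)); simpl; f_equal; ring.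
    unfold n; lia. unfold n; rewrite S_INR; lra. }
  assert (Hcont : forall t, continuous (gam n p) t) by (intros; apply gam_cont).
  assert (Hin : forall t, 0 <= t <= 1 -> Omega (gam n p t)).
  { intros t Ht. destruct (exists_k n (INR n * t)) as [k [Hk1 Hk2]]. unfold n; lia. nra.
    rewrite (gam_val n p t k) by auto.
    destruct (Hl k Hk1) as [c [r [Hr [Hsub [H1 H2]]]]]. apply Hsub. apply in_seg; auto. lra. }
  destruct (HSC (gam n p) Hcont Hin (eq_trans Hg0 (eq_trans Hloop (eq_sym Hg1))))
    as [H [HHc [HHin [HH0 [HH1 HHlr]]]]].
  destruct (unif_sq Omega Ho H HHc HHin) as [d [Hd Hcell]].
  destruct (INR_unbounded (/ d)) as [M HM].
  assert (HdM : 0 < / d) by (apply Rinv_0_lt_compat; auto).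
  assert (HM0 : 0 < INR M) by lra.
  assert (HMd : / INR M < d).
  { replace d with (/ / d) by (field; lra). apply Rinv_lt_contravar. nra. lra. }
  set (N := (n * M)%nat).
  assert (HN : INR N = INR n * INR M) by (unfold N; apply mult_INR).
  assert (HN0 : 0 < INR N) by (rewrite HN; nra).
  assert (HNd : / INR N < d).
  { eapply Rle_lt_trans. 2: exact HMd. apply Rinv_le_contravar. auto. rewrite HN.
    assert (1 <= INR n). { replace 1 with (INR 1) by reflexivity. apply le_INR. unfold n; lia. } nra. }
  assert (E : forall i, INR (S i) / INR N = INR i / INR N + / INR N).
  { intros i. rewrite S_INR. field. lra. }
  assert (Hb : forall i, (i <= N)%nat -> 0 <= INR i / INR N <= 1).
  { intros i Hi. apply le_INR in Hi. split. apply Rdiv_le_0_compat. apply pos_INR. auto.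
    apply (Rmult_le_reg_r (INR N)). auto. field_simplify; lra. }
  set (q := fun i j => H (INR i / INR N, INR j / INR N)).
  assert (Hq0 : forall j, (j <= N)%nat -> q O j = gam n p 0).
  { intros j Hj. unfold q. replace (INR 0 / INR N) with 0 by (simpl; field; lra). apply HHlr; auto. }
  assert (HqN : forall j, (j <= N)%nat -> q N j = gam n p 0).
  { intros j Hj. unfold q. replace (INR N / INR N) with 1 by (field; lra). apply HHlr; auto. }
  assert (Hcell2 : forall i j, (i < N)%nat -> (j < N)%nat ->
    Dl a b (q i j) (q (S i) j) - Dl a b (q i (S j)) (q (S i) (S j)) =
    Dl a b (q i j) (q i (S j)) - Dl a b (q (S i) j) (q (S i) (S j))).
  { intros i j Hi Hj.
    assert (Hi' := Hb (S i) Hi). assert (Hj' := Hb (S j) Hj).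
    assert (Hi'' := Hb i (Nat.lt_le_incl _ _ Hi)). assert (Hj'' := Hb j (Nat.lt_le_incl _ _ Hj)).
    rewrite E in Hi', Hj'.
    assert (0 < / INR N) by (apply Rinv_0_lt_compat; auto).
    destruct (Hcell (INR i / INR N) (INR j / INR N) (/ INR N)) as [c [r [Hr [Hsub [H1 [H2 [H3 H4]]]]]]];
      try lra.
    unfold q. rewrite !E.
    rewrite (Dl_sq Omega a b HP c r Hsub _ (H (_ + _, INR j / INR N))) by auto.
    rewrite (Dl_sq Omega a b HP c r Hsub (H (INR i / INR N, _ + _)) (H (_ + _, _ + _))) by auto.
    rewrite (Dl_sq Omega a b HP c r Hsub (H (INR i / INR N, INR j / INR N)) (H (INR i / INR N, _ + _))) by auto.
    rewrite (Dl_sq Omega a b HP c r Hsub (H (_ + _, INR j / INR N)) (H (_ + _, _ + _))) by auto.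
    ring. }
  set (Rw := fun j => csum (fun i => Dl a b (q i j) (q (S i) j)) N).
  assert (Hstep : forall j, (j < N)%nat -> Rw j = Rw (S j)).
  { intros j Hj. apply Rminus_diag_uniq. unfold Rw. rewrite <- csum_minus.
    rewrite (csum_ext _ (fun i => (fun i => Dl a b (q i j) (q i (S j))) i - (fun i => Dl a b (q i j) (q i (S j))) (S i)))
      by (intros i Hi; apply Hcell2; auto).
    rewrite csum_tele. rewrite Hq0, Hq0, HqN, HqN by lia. ring. }
  assert (Hall : forall j, (j <= N)%nat -> Rw O = Rw j).
  { induction j. auto. intros Hj. rewrite IHj by lia. apply Hstep. lia. }
  assert (HRN : Rw N = 0).
  { unfold Rw. apply csum_zero. intros i Hi. unfold q.
    replace (INR N / INR N) with 1 by (field; lra).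
    rewrite !HH1 by (apply Hb; lia). apply Dl_refl. }
  assert (HR0 : Rw O = csum (fun i => Dl a b (gam n p (INR i / INR N)) (gam n p (INR (S i) / INR N))) N).
  { unfold Rw. apply csum_ext. intros i Hi. unfold q. replace (INR 0 / INR N) with 0 by (simpl; field; lra).
    rewrite !HH0 by (apply Hb; lia). auto. }
  rewrite <- HRN, <- (Hall N (le_n _)), HR0.
  unfold N. rewrite csum_blocks. fold N. apply csum_ext. intros k Hk.
  destruct (Hl k Hk) as [c [r [Hr [Hsub [Hc1 Hc2]]]]].
  set (e := fun l => gam n p (INR (k * M + l) / INR N)).
  assert (He : forall l, (l <= M)%nat -> e l = (Re (p k) + (INR l / INR M) * (Re (p (S k)) - Re (p k)),
               Im (p k) + (INR l / INR M) * (Im (p (S k)) - Im (p k)))).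
  { intros l Hlm. apply le_INR in Hlm.
    assert (Eq : INR n * (INR (k * M + l) / INR N) = INR k + INR l / INR M).
    { rewrite plus_INR, mult_INR, HN. field. lra. }
    unfold e. rewrite (gam_val n p _ k); auto. rewrite Eq. f_equal; ring.
    rewrite Eq. split. assert (0 <= INR l / INR M) by (apply Rdiv_le_0_compat; auto; apply pos_INR). lra.
    assert (INR l / INR M <= 1). { apply (Rmult_le_reg_r (INR M)). auto. field_simplify; lra. } lra. }
  assert (Hein : forall l, (l <= M)%nat -> sq c r (e l)).
  { intros l Hlm. rewrite He by auto. apply in_seg; auto. apply le_INR in Hlm. split.
    apply Rdiv_le_0_compat; auto; apply pos_INR.
    apply (Rmult_le_reg_r (INR M)). auto. field_simplify; lra. }
  assert (Hsum : forall l, (l <= M)%nat -> csum (fun l => Dl a b (e l) (e (S l))) l = Dl a b (e O) (e l)).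
  { induction l. intros; simpl. rewrite Dl_refl. auto. intros Hlm. simpl. rewrite IHl by lia.
    apply (Dl_tri Omega a b HP c r); auto; apply Hein; lia. }
  symmetry. transitivity (csum (fun l => Dl a b (e l) (e (S l))) M).
  { apply csum_ext. intros l Hlm. unfold e. replace (S (k * M + l)) with (k * M + S l)%nat by lia. auto. }
  rewrite Hsum by auto. f_equal.
  - rewrite He by lia. replace (INR 0 / INR M) with 0 by (simpl; field; lra).
    destruct (p k); simpl; f_equal; ring.
  - rewrite He by lia. replace (INR M / INR M) with 1 by (field; lra).
    destruct (p (S k)), (p k); simpl; f_equal; ring.
Qed.

End Loop2.

Lemma csum_first (g : nat -> R) n : csum g (S n) = g O + csum (fun l => g (S l)) n.
Proof. change (S n) with (1 + n)%nat. rewrite csum_add. simpl. ring. Qed.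

Lemma csum_rev (f : nat -> R) n : csum f n = csum (fun l => f (n - S l)%nat) n.
Proof.
  induction n. reflexivity.
  rewrite (csum_first (fun l => f (S n - S l)%nat)). replace (S n - 1)%nat with n by lia.
  simpl csum at 1. rewrite IHn.
  rewrite Rplus_comm. f_equal.
Qed.

Lemma csum_opp (g : nat -> R) n : csum (fun l => - g l) n = - csum g n.
Proof. induction n; simpl. ring. rewrite IHn. ring. Qed.

Lemma RInt_bound (f : R -> R) (x1 x2 K : R) : ex_RInt f x1 x2 ->
  (forall t, Rmin x1 x2 <= t <= Rmax x1 x2 -> Rabs (f t) <= K) -> Rabs (RInt f x1 x2) <= Rabs (x2 - x1) * K.
Proof.
  intros He Hb. destruct (Rle_dec x1 x2).
  - rewrite (Rabs_right (x2 - x1)) by lra. apply abs_RInt_le_const; auto.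
    intros t Ht. apply Hb. rewrite Rmin_left, Rmax_right by lra. auto.
  - rewrite <- (opp_RInt_swap f x2 x1) by (apply ex_RInt_swap; auto). unfold opp; simpl. rewrite Rabs_Ropp.
    rewrite (Rabs_left (x2 - x1)) by lra. replace (- (x2 - x1)) with (x1 - x2) by ring.
    apply abs_RInt_le_const. lra. apply ex_RInt_swap. auto.
    intros t Ht. apply Hb. rewrite Rmin_right, Rmax_left by lra. auto.
Qed.

Section Prim.
Variables (Omega : C -> Prop) (a b : C -> R).
Hypothesis HP : HPab Omega a b.
Hypothesis Ho : open Omega.
Hypothesis HSC : forall gam : R -> C,
    (forall t, continuous gam t) ->
    (forall t, 0 <= t <= 1 -> Omega (gam t)) ->
    gam 0 = gam 1 ->
    exists H : C -> C,
      (forall p, continuous H p) /\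
      (forall s t, 0 <= s <= 1 -> 0 <= t <= 1 -> Omega (H (s, t))) /\
      (forall s, 0 <= s <= 1 -> H (s, 0) = gam s) /\
      (forall s, 0 <= s <= 1 -> H (s, 1) = gam 0) /\
      (forall t, 0 <= t <= 1 -> H (0, t) = gam 0 /\ H (1, t) = gam 0).
Hypothesis Hconn : forall U V : C -> Prop, open U -> open V ->
    (forall z, Omega z -> U z \/ V z) ->
    (exists z, Omega z /\ U z) -> (exists z, Omega z /\ V z) ->
    exists z, Omega z /\ U z /\ V z.
Variable z0 : C.
Hypothesis Hz0 : Omega z0.

Definition reach (z : C) (s : R) : Prop :=
  exists n (p : nat -> C), p O = z0 /\ p n = z /\ (forall k, (k < n)%nat -> link Omega (p k) (p (S k))) /\
    csum (fun k => Dl a b (p k) (p (S k))) n = s.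

Lemma reach_ext z w s : reach z s -> link Omega z w -> reach w (s + Dl a b z w).
Proof.
  intros [n [p [H0 [Hn [Hl Hs]]]]] Hzw.
  exists (S n), (fun k => if (k <=? n)%nat then p k else w).
  split. simpl. auto. split. destruct (Nat.leb_spec (S n) n). lia. auto.
  split.
  - intros k Hk. destruct (Nat.leb_spec k n); destruct (Nat.leb_spec (S k) n).
    apply Hl. lia. assert (k = n) by lia. subst. auto. lia. lia.
  - cbn [csum]. rewrite <- Hs. destruct (Nat.leb_spec n n); [|lia]. destruct (Nat.leb_spec (S n) n); [lia|].
    rewrite Hn. f_equal. apply csum_ext. intros i Hi.
    destruct (Nat.leb_spec i n); destruct (Nat.leb_spec (S i) n); auto; lia.
Qed.

Lemma reach_unique z s1 s2 : reach z s1 -> reach z s2 -> s1 = s2.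
Proof.
  intros [n1 [p [Hp0 [Hpn [Hpl Hps]]]]] [n2 [q [Hq0 [Hqn [Hql Hqs]]]]].
  set (r := fun k => if (k <=? n1)%nat then p k else q (n1 + n2 - k)%nat).
  assert (Hr : forall k, (n1 <= k)%nat -> r k = q (n1 + n2 - k)%nat).
  { intros k Hk. unfold r. destruct (Nat.leb_spec k n1); auto. replace k with n1 by lia.
    rewrite Hpn. replace (n1 + n2 - n1)%nat with n2 by lia. auto. }
  assert (Hloop := loop_zero Omega a b HP Ho HSC (n1 + n2) r).
  assert (L : forall k, (k < n1 + n2)%nat -> link Omega (r k) (r (S k))).
  { intros k Hk. destruct (Nat.lt_ge_cases k n1).
    - unfold r. destruct (Nat.leb_spec k n1); [|lia]. destruct (Nat.leb_spec (S k) n1); [|lia]. auto.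
    - rewrite !Hr by lia. apply link_sym. replace (n1 + n2 - k)%nat with (S (n1 + n2 - S k))%nat by lia.
      apply Hql. lia. }
  assert (R0 : r O = r (n1 + n2)%nat).
  { rewrite (Hr (n1 + n2)%nat) by lia. replace (n1 + n2 - (n1 + n2))%nat with O by lia. unfold r. simpl. congruence. }
  specialize (Hloop L R0). rewrite csum_add in Hloop.
  assert (A1 : csum (fun k => Dl a b (r k) (r (S k))) n1 = s1).
  { rewrite <- Hps. apply csum_ext. intros i Hi. unfold r.
    destruct (Nat.leb_spec i n1); [|lia]. destruct (Nat.leb_spec (S i) n1); [|lia]. auto. }
  assert (A2 : csum (fun l => Dl a b (r (n1 + l)%nat) (r (S (n1 + l)))) n2 = - s2).
  { rewrite <- Hqs. rewrite (csum_rev (fun k => Dl a b (q k) (q (S k)))).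
    rewrite <- csum_opp.
    apply csum_ext. intros l Hl. rewrite !Hr by lia.
      replace (n1 + n2 - (n1 + l))%nat with (S (n2 - S l)) by lia.
      replace (n1 + n2 - S (n1 + l))%nat with (n2 - S l)%nat by lia.
      apply (Dl_anti Omega a b HP). apply Hql. lia. }
  lra.
Qed.

Lemma sq_self z r : 0 < r -> sq z r z.
Proof. intros Hr. split; replace (_ - _) with 0 by ring; rewrite Rabs_R0; auto. Qed.

Lemma link_sq z r w : 0 < r -> (forall u, sq z r u -> Omega u) -> sq z r w -> link Omega z w.
Proof. intros Hr Hs Hw. exists z, r. split; [auto|split; [auto|split; [apply sq_self; auto| auto]]]. Qed.

Lemma reach_z0 : reach z0 0.
Proof. exists O, (fun _ => z0). repeat split; auto. intros; lia. Qed.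

Lemma reach_exists z : Omega z -> exists s, reach z s.
Proof.
  intros Hz. apply NNPP. intros Hn.
  set (U := fun w => Omega w /\ exists s, reach w s).
  set (V := fun w => Omega w /\ ~ exists s, reach w s).
  assert (HU : open U).
  { intros w [Hw [s Hs]]. destruct (open_sq Omega w Ho Hw) as [r [Hr Hsq]].
    apply locally_sq. exists r. split; auto. intros u Hu. split. auto.
    exists (s + Dl a b w u). apply reach_ext; auto. apply (link_sq w r); auto. }
  assert (HV : open V).
  { intros w [Hw Hnw]. destruct (open_sq Omega w Ho Hw) as [r [Hr Hsq]].
    apply locally_sq. exists r. split; auto. intros u Hu. split. auto.
    intros [s Hs]. apply Hnw. exists (s + Dl a b u w). apply reach_ext; auto.
    apply link_sym. apply (link_sq w r); auto. }
  destruct (Hconn U V HU HV) as [w [_ [[_ H1] [_ H2]]]].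
  - intros w Hw. destruct (classic (exists s, reach w s)); [left|right]; split; auto.
  - exists z0. split; auto. split; auto. exists 0. apply reach_z0.
  - exists z. split; auto. split; auto.
  - auto.
Qed.

Lemma ex_prim_val z : exists s, Omega z -> reach z s.
Proof.
  destruct (classic (Omega z)) as [Hz|Hz].
  destruct (reach_exists z Hz) as [s Hs]. exists s. auto.
  exists 0. intros H; contradiction.
Qed.

Definition prim (z : C) : R := proj1_sig (constructive_indefinite_description _ (ex_prim_val z)).

Lemma prim_reach z : Omega z -> reach z (prim z).
Proof. unfold prim. destruct (constructive_indefinite_description _ (ex_prim_val z)). simpl. auto. Qed.

Lemma prim_local z r : 0 < r -> (forall u, sq z r u -> Omega u) -> Omega z ->
  forall w, sq z r w -> prim w = prim z + Dl a b z w.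
Proof.
  intros Hr Hs Hz w Hw. apply (reach_unique w). apply prim_reach. apply Hs; auto.
  apply reach_ext. apply prim_reach; auto. apply (link_sq z r); auto.
Qed.

End Prim.


Lemma cont_bound (f : C -> R) z : continuous f z -> exists r, 0 < r /\ forall w, sq z r w -> Rabs (f w) <= Rabs (f z) + 1.
Proof.
  intros H. unfold continuous in H. rewrite filterlim_locally in H. specialize (H (mkposreal 1 Rlt_0_1)).
  apply locally_sq in H. destruct H as [r [Hr H]]. exists r. split; auto. intros w Hw.
  specialize (H w Hw). unfold ball in H; simpl in H. unfold AbsRing_ball, abs, minus, plus, opp in H; simpl in H.
  revert H; unfold Rabs; repeat destruct Rcase_abs; lra.
Qed.

Lemma continuous_R_intro (f : C -> R) z : (forall eps, 0 < eps -> exists d, 0 < d /\ forall w, sq z d w -> Rabs (f w - f z) < eps) -> continuous f z.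
Proof.
  intros H. unfold continuous. apply filterlim_locally. intros eps. apply locally_sq.
  destruct (H eps (cond_pos eps)) as [d [Hd H2]]. exists d. split; auto.
Qed.

Lemma Dl_cont Omega a b (HP : HPab Omega a b) z r : 0 < r -> (forall w, sq z r w -> Omega w) ->
  continuous (Dl a b z) z.
Proof.
  intros Hr Hs. assert (Hz : Omega z) by (apply Hs, sq_self; auto).
  destruct (HP z Hz) as [Ha [Hb _]].
  destruct (cont_bound a z Ha) as [ra [Hra Ba]]. destruct (cont_bound b z Hb) as [rb [Hrb Bb]].
  set (K := Rabs (a z) + Rabs (b z) + 1).
  assert (HK : 0 < K) by (unfold K; generalize (Rabs_pos (a z)) (Rabs_pos (b z)); lra).
  set (rho := Rmin r (Rmin ra rb)).
  assert (Hrho : 0 < rho) by (unfold rho; repeat apply Rmin_pos; auto).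
  assert (Hrr : rho <= r /\ rho <= ra /\ rho <= rb).
  { unfold rho. split. apply Rmin_l. split. eapply Rle_trans. apply Rmin_r. apply Rmin_l.
    eapply Rle_trans. apply Rmin_r. apply Rmin_r. }
  assert (Hbd : forall w, sq z rho w -> Rabs (Dl a b z w) <= Rabs (Re w - Re z) * K + Rabs (Im w - Im z) * K).
  { intros [x y] [H1 H2]; simpl in *. unfold Dl; simpl.
    assert (Hz1 : Rabs (Re z - Re z) < rho) by (replace (Re z - Re z) with 0 by ring; rewrite Rabs_R0; auto).
    assert (Hz2 : Rabs (Im z - Im z) < rho) by (replace (Im z - Im z) with 0 by ring; rewrite Rabs_R0; auto).
    eapply Rle_trans. apply Rabs_triang. apply Rplus_le_compat.
    - apply RInt_bound. apply (ex_RInt_u Omega a b HP z r Hs); lra.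
      intros t Ht. assert (sq z rho (t, Im z)) by (split; simpl; [apply (seg_in (Re z) x); auto|auto]).
      eapply Rle_trans. apply Ba. destruct H; split; lra. unfold K. generalize (Rabs_pos (b z)); lra.
    - apply RInt_bound. apply (ex_RInt_v Omega a b HP z r Hs); lra.
      intros t Ht. assert (sq z rho (x, t)) by (split; simpl; [auto|apply (seg_in (Im z) y); auto]).
      eapply Rle_trans. apply Bb. destruct H; split; lra. unfold K. generalize (Rabs_pos (a z)); lra. }
  apply continuous_R_intro. intros eps Heps.
  exists (Rmin rho (eps / (2 * K + 2))). split. apply Rmin_pos; auto. apply Rdiv_lt_0_compat; lra.
  intros w [H1 H2]. rewrite Dl_refl, Rminus_0_r.
  assert (Hm1 := Rmin_l rho (eps / (2 * K + 2))). assert (Hm2 := Rmin_r rho (eps / (2 * K + 2))).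
  eapply Rle_lt_trans. apply Hbd. split; lra.
  assert (eps / (2 * K + 2) * (2 * K + 2) = eps) by (field; lra).
  assert (Rabs (Re w - Re z) * K <= eps / (2 * K + 2) * K) by (apply Rmult_le_compat_r; lra).
  assert (Rabs (Im w - Im z) * K <= eps / (2 * K + 2) * K) by (apply Rmult_le_compat_r; lra).
  assert (0 < eps / (2 * K + 2)) by (apply Rdiv_lt_0_compat; lra).
  nra.
Qed.

Theorem poincare Omega a b : HPab Omega a b -> simply_connected Omega ->
  exists f : C -> R, forall z, Omega z ->
    is_derive (fun t => f (t, Im z)) (Re z) (a z) /\
    is_derive (fun t => f (Re z, t)) (Im z) (b z) /\ continuous f z.
Proof.
  intros HP [[Ho [[z0 Hz0] Hconn]] HSC].
  exists (prim Omega a b Ho Hconn z0 Hz0). intros z Hz.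
  destruct (open_sq Omega z Ho Hz) as [r [Hr Hs]].
  assert (Hloc := prim_local Omega a b HP Ho HSC Hconn z0 Hz0 z r Hr Hs Hz).
  destruct (sq_deriv Omega a b HP z r Hs z (sq_self z r Hr)) as [Du Dv].
  split; [|split].
  - apply (is_derive_ext_loc (fun t => prim Omega a b Ho Hconn z0 Hz0 z + Dl a b z (t, Im z))).
    apply (locally_R (Re z) _ r Hr). intros t Ht. rewrite (Hloc (_, _)). auto. split; simpl; auto.
    replace (Im z - Im z) with 0 by ring; rewrite Rabs_R0; auto.
    replace (a z) with (0 + a z) by ring. apply (is_derive_plus (fun _ => _) (fun t => Dl a b z (t, Im z))).
    apply (@is_derive_const R_AbsRing R_NormedModule). auto.
  - apply (is_derive_ext_loc (fun t => prim Omega a b Ho Hconn z0 Hz0 z + Dl a b z (Re z, t))).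
    apply (locally_R (Im z) _ r Hr). intros t Ht. rewrite (Hloc (_, _)). auto. split; simpl; auto.
    replace (Re z - Re z) with 0 by ring; rewrite Rabs_R0; auto.
    replace (b z) with (0 + b z) by ring. apply (is_derive_plus (fun _ => _) (fun t => Dl a b z (Re z, t))).
    apply (@is_derive_const R_AbsRing R_NormedModule). auto.
  - apply (continuous_ext_loc _ (fun w => prim Omega a b Ho Hconn z0 Hz0 z + Dl a b z w)).
    apply locally_sq. exists r. split; auto. intros w Hw. rewrite (Hloc w); auto.
    apply cU_plus. apply cU_const. apply (Dl_cont Omega a b HP z r Hr Hs).
Qed.

Lemma exR_plus (f g : R -> R) x : ex_derive f x -> ex_derive g x -> ex_derive (fun t => f t + g t) x.
Proof. apply (@ex_derive_plus R_AbsRing R_NormedModule). Qed.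
Lemma exR_minus (f g : R -> R) x : ex_derive f x -> ex_derive g x -> ex_derive (fun t => f t - g t) x.
Proof. apply (@ex_derive_minus R_AbsRing R_NormedModule). Qed.
Lemma exR_opp (f : R -> R) x : ex_derive f x -> ex_derive (fun t => - f t) x.
Proof. apply (@ex_derive_opp R_AbsRing R_NormedModule). Qed.
Lemma exR_const (c : R) x : ex_derive (fun _ => c) x.
Proof. apply (@ex_derive_const R_AbsRing R_NormedModule). Qed.
Lemma exR_ext_loc (f g : R -> R) x : locally x (fun t => f t = g t) -> ex_derive f x -> ex_derive g x.
Proof. apply (@ex_derive_ext_loc R_AbsRing R_NormedModule). Qed.

Definition C1R (Omega : C -> Prop) (f : C -> R) : Prop :=
  forall z, Omega z ->
    ex_derive (fun t => f (t, Im z)) (Re z) /\ ex_derive (fun t => f (Re z, t)) (Im z) /\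
    continuous f z /\ continuous (pu f) z /\ continuous (pv f) z.

Lemma C2R_iff Omega f : C2R Omega f <-> C1R Omega f /\ C1R Omega (pu f) /\ C1R Omega (pv f).
Proof.
  unfold C2R, C1R. split.
  - intros H. split; [|split]; intros z Hz; specialize (H z Hz); tauto.
  - intros [H1 [H2 H3]] z Hz. specialize (H1 z Hz). specialize (H2 z Hz). specialize (H3 z Hz). tauto.
Qed.

Lemma C1R_eq Omega f g : (forall w, f w = g w) -> C1R Omega f -> C1R Omega g.
Proof. intros H. replace g with f. auto. apply functional_extensionality. auto. Qed.

Lemma line_u Omega z : open Omega -> Omega z -> locally (Re z) (fun t => Omega (t, Im z)).
Proof.
  intros Ho Hz. destruct (open_sq Omega z Ho Hz) as [r [Hr H]].
  exists (mkposreal r Hr). intros t Ht. apply H. split; simpl. exact Ht.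
  replace (Im z - Im z) with 0 by ring. rewrite Rabs_R0. auto.
Qed.
Lemma line_v Omega z : open Omega -> Omega z -> locally (Im z) (fun t => Omega (Re z, t)).
Proof.
  intros Ho Hz. destruct (open_sq Omega z Ho Hz) as [r [Hr H]].
  exists (mkposreal r Hr). intros t Ht. apply H. split; simpl.
  replace (Re z - Re z) with 0 by ring. rewrite Rabs_R0. auto. exact Ht.
Qed.

Lemma pu_ext_open Omega f g : open Omega -> (forall w, Omega w -> f w = g w) ->
  forall w, Omega w -> pu f w = pu g w.
Proof.
  intros Ho H w Hw. unfold pu. apply Derive_ext_loc.
  generalize (line_u Omega w Ho Hw). apply filter_imp. intros t Ht. apply H. auto.
Qed.
Lemma pv_ext_open Omega f g : open Omega -> (forall w, Omega w -> f w = g w) ->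
  forall w, Omega w -> pv f w = pv g w.
Proof.
  intros Ho H w Hw. unfold pv. apply Derive_ext_loc.
  generalize (line_v Omega w Ho Hw). apply filter_imp. intros t Ht. apply H. auto.
Qed.

Lemma cont_ext_open Omega (f g : C -> R) z : open Omega -> Omega z -> (forall w, Omega w -> f w = g w) ->
  continuous f z -> continuous g z.
Proof.
  intros Ho Hz H. apply continuous_ext_loc.
  generalize (Ho z Hz). apply filter_imp. intros w Hw. symmetry. symmetry. apply H. auto.
Qed.

Lemma C1R_ext_open Omega f g : open Omega -> (forall w, Omega w -> f w = g w) -> C1R Omega f -> C1R Omega g.
Proof.
  intros Ho H Hf z Hz. destruct (Hf z Hz) as [H1 [H2 [H3 [H4 H5]]]].
  split; [|split; [|split; [|split]]].
  - eapply exR_ext_loc. 2: exact H1. generalize (line_u Omega z Ho Hz). apply filter_imp. intros; apply H; auto.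
  - eapply exR_ext_loc. 2: exact H2. generalize (line_v Omega z Ho Hz). apply filter_imp. intros; apply H; auto.
  - apply (cont_ext_open Omega f g z Ho Hz); auto.
  - apply (cont_ext_open Omega (pu f) (pu g) z Ho Hz); auto. intros w Hw; apply (pu_ext_open Omega); auto.
  - apply (cont_ext_open Omega (pv f) (pv g) z Ho Hz); auto. intros w Hw; apply (pv_ext_open Omega); auto.
Qed.

Lemma pu_plus f g z : ex_derive (fun t => f (t, Im z)) (Re z) -> ex_derive (fun t => g (t, Im z)) (Re z) ->
  pu (fun w => f w + g w) z = pu f z + pu g z.
Proof. intros. unfold pu. apply (Derive_plus (fun t => f (t, Im z)) (fun t => g (t, Im z))); auto. Qed.
Lemma pv_plus f g z : ex_derive (fun t => f (Re z, t)) (Im z) -> ex_derive (fun t => g (Re z, t)) (Im z) ->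
  pv (fun w => f w + g w) z = pv f z + pv g z.
Proof. intros. unfold pv. apply (Derive_plus (fun t => f (Re z, t)) (fun t => g (Re z, t))); auto. Qed.
Lemma pu_mult f g z : ex_derive (fun t => f (t, Im z)) (Re z) -> ex_derive (fun t => g (t, Im z)) (Re z) ->
  pu (fun w => f w * g w) z = pu f z * g z + f z * pu g z.
Proof. intros. unfold pu. destruct z. apply (Derive_mult (fun t => f (t, _)) (fun t => g (t, _))); auto. Qed.
Lemma pv_mult f g z : ex_derive (fun t => f (Re z, t)) (Im z) -> ex_derive (fun t => g (Re z, t)) (Im z) ->
  pv (fun w => f w * g w) z = pv f z * g z + f z * pv g z.
Proof. intros. unfold pv. destruct z. apply (Derive_mult (fun t => f (_, t)) (fun t => g (_, t))); auto. Qed.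
Lemma pu_opp f z : pu (fun w => - f w) z = - pu f z.
Proof. unfold pu. apply (Derive_opp (fun t => f (t, Im z))). Qed.
Lemma pv_opp f z : pv (fun w => - f w) z = - pv f z.
Proof. unfold pv. apply (Derive_opp (fun t => f (Re z, t))). Qed.
Lemma pu_const c z : pu (fun _ => c) z = 0.
Proof. unfold pu. apply Derive_const. Qed.
Lemma pv_const c z : pv (fun _ => c) z = 0.
Proof. unfold pv. apply Derive_const. Qed.
Lemma pu_inv f z : ex_derive (fun t => f (t, Im z)) (Re z) -> f z <> 0 ->
  pu (fun w => / f w) z = - pu f z * (/ f z * / f z).
Proof. intros. unfold pu. destruct z. rewrite (Derive_inv (fun t => f (t, _))); auto. simpl. field. auto. Qed.
Lemma pv_inv f z : ex_derive (fun t => f (Re z, t)) (Im z) -> f z <> 0 ->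
  pv (fun w => / f w) z = - pv f z * (/ f z * / f z).
Proof. intros. unfold pv. destruct z. rewrite (Derive_inv (fun t => f (_, t))); auto. simpl. field. auto. Qed.

Section Clos.
Variable Omega : C -> Prop.
Hypothesis Ho : open Omega.

Lemma C1R_const c : C1R Omega (fun _ => c).
Proof.
  intros z Hz. split; [|split; [|split; [|split]]]; try apply exR_const. apply cU_const.
  eapply cU_ext. 2: apply (cU_const 0). intros; rewrite pu_const; auto.
  eapply cU_ext. 2: apply (cU_const 0). intros; rewrite pv_const; auto.
Qed.

Lemma C1R_plus f g : C1R Omega f -> C1R Omega g -> C1R Omega (fun w => f w + g w).
Proof.
  intros Hf Hg z Hz. destruct (Hf z Hz) as [F1 [F2 [F3 [F4 F5]]]]. destruct (Hg z Hz) as [G1 [G2 [G3 [G4 G5]]]].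
  split; [|split; [|split; [|split]]].
  - apply exR_plus; auto.
  - apply exR_plus; auto.
  - apply cU_plus; auto.
  - apply (cont_ext_open Omega (fun w => pu f w + pu g w)); auto.
    intros w Hw. symmetry. apply pu_plus; apply (Hf w Hw) || apply (Hg w Hw). apply cU_plus; auto.
  - apply (cont_ext_open Omega (fun w => pv f w + pv g w)); auto.
    intros w Hw. symmetry. apply pv_plus; apply (Hf w Hw) || apply (Hg w Hw). apply cU_plus; auto.
Qed.

Lemma C1R_opp f : C1R Omega f -> C1R Omega (fun w => - f w).
Proof.
  intros Hf z Hz. destruct (Hf z Hz) as [F1 [F2 [F3 [F4 F5]]]].
  split; [|split; [|split; [|split]]].
  - apply exR_opp; auto.
  - apply exR_opp; auto.
  - apply cU_opp; auto.
  - eapply cU_ext. 2: apply (cU_opp _ _ F4). intros; rewrite pu_opp; auto.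
  - eapply cU_ext. 2: apply (cU_opp _ _ F5). intros; rewrite pv_opp; auto.
Qed.

Lemma C1R_minus f g : C1R Omega f -> C1R Omega g -> C1R Omega (fun w => f w - g w).
Proof. intros. apply C1R_plus; auto. apply C1R_opp; auto. Qed.

Lemma C1R_mult f g : C1R Omega f -> C1R Omega g -> C1R Omega (fun w => f w * g w).
Proof.
  intros Hf Hg z Hz. destruct (Hf z Hz) as [F1 [F2 [F3 [F4 F5]]]]. destruct (Hg z Hz) as [G1 [G2 [G3 [G4 G5]]]].
  split; [|split; [|split; [|split]]].
  - apply ex_derive_mult; auto.
  - apply ex_derive_mult; auto.
  - apply cU_mult; auto.
  - apply (cont_ext_open Omega (fun w => pu f w * g w + f w * pu g w)); auto.
    intros w Hw. symmetry. apply pu_mult; apply (Hf w Hw) || apply (Hg w Hw).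
    apply cU_plus; apply cU_mult; auto.
  - apply (cont_ext_open Omega (fun w => pv f w * g w + f w * pv g w)); auto.
    intros w Hw. symmetry. apply pv_mult; apply (Hf w Hw) || apply (Hg w Hw).
    apply cU_plus; apply cU_mult; auto.
Qed.

Lemma C1R_inv f : C1R Omega f -> (forall w, Omega w -> f w <> 0) -> C1R Omega (fun w => / f w).
Proof.
  intros Hf Hn z Hz. destruct (Hf z Hz) as [F1 [F2 [F3 [F4 F5]]]].
  split; [|split; [|split; [|split]]].
  - apply (ex_derive_inv (fun t => f (t, Im z))); auto. apply Hn. destruct z; auto.
  - apply (ex_derive_inv (fun t => f (Re z, t))); auto. apply Hn. destruct z; auto.
  - apply cU_inv; auto.
  - apply (cont_ext_open Omega (fun w => - pu f w * (/ f w * / f w))); auto.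
    intros w Hw. symmetry. apply pu_inv; auto. apply (Hf w Hw).
    apply cU_mult. apply cU_opp; auto. apply cU_mult; apply cU_inv; auto.
  - apply (cont_ext_open Omega (fun w => - pv f w * (/ f w * / f w))); auto.
    intros w Hw. symmetry. apply pv_inv; auto. apply (Hf w Hw).
    apply cU_mult. apply cU_opp; auto. apply cU_mult; apply cU_inv; auto.
Qed.

End Clos.

Lemma pu_minus f g z : ex_derive (fun t => f (t, Im z)) (Re z) -> ex_derive (fun t => g (t, Im z)) (Re z) ->
  pu (fun w => f w - g w) z = pu f z - pu g z.
Proof. intros. unfold pu. apply (Derive_minus (fun t => f (t, Im z)) (fun t => g (t, Im z))); auto. Qed.
Lemma pv_minus f g z : ex_derive (fun t => f (Re z, t)) (Im z) -> ex_derive (fun t => g (Re z, t)) (Im z) ->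
  pv (fun w => f w - g w) z = pv f z - pv g z.
Proof. intros. unfold pv. apply (Derive_minus (fun t => f (Re z, t)) (fun t => g (Re z, t))); auto. Qed.

Definition exC (h : R -> C) (x : R) : Prop :=
  ex_derive (fun t => Re (h t)) x /\ ex_derive (fun t => Im (h t)) x.
Definition DC (h : R -> C) (x : R) : C :=
  (Derive (fun t => Re (h t)) x, Derive (fun t => Im (h t)) x).

Lemma Cpu_DC F z : Cpu F z = DC (fun t => F (t, Im z)) (Re z).
Proof. reflexivity. Qed.
Lemma Cpv_DC F z : Cpv F z = DC (fun t => F (Re z, t)) (Im z).
Proof. reflexivity. Qed.

Lemma exC_plus h1 h2 x : exC h1 x -> exC h2 x -> exC (fun t => (h1 t + h2 t)%C) x.
Proof. intros [A B] [C D]. split; simpl; apply exR_plus; auto. Qed.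
Lemma exC_mult h1 h2 x : exC h1 x -> exC h2 x -> exC (fun t => (h1 t * h2 t)%C) x.
Proof. intros [A B] [C D]. split; simpl. apply exR_minus; apply ex_derive_mult; auto.
  apply exR_plus; apply ex_derive_mult; auto. Qed.
Lemma exC_const c x : exC (fun _ => c) x.
Proof. split; apply exR_const. Qed.
Lemma exC_opp h x : exC h x -> exC (fun t => (- h t)%C) x.
Proof. intros [A B]. split; simpl; apply exR_opp; auto. Qed.
Lemma exC_minus h1 h2 x : exC h1 x -> exC h2 x -> exC (fun t => (h1 t - h2 t)%C) x.
Proof. intros. apply exC_plus; auto. apply exC_opp; auto. Qed.

Lemma C_neq0 (z : C) : z <> 0%C -> Re z ^ 2 + Im z ^ 2 <> 0.
Proof.
  intros H. destruct z as [a b]. simpl. intros E. apply H.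
  assert (a = 0) by nra. assert (b = 0) by nra. subst. reflexivity.
Qed.

Lemma exC_inv h x : exC h x -> h x <> 0%C -> exC (fun t => (/ h t)%C) x.
Proof.
  intros [A B] Hn. assert (Hd := C_neq0 _ Hn).
  assert (Ed : ex_derive (fun t => Re (h t) ^ 2 + Im (h t) ^ 2) x).
  { apply exR_plus; apply ex_derive_pow; auto. }
  split; simpl.
  - apply (ex_derive_div (fun t => fst (h t)) (fun t => fst (h t) ^ 2 + snd (h t) ^ 2)); auto.
  - apply (ex_derive_div (fun t => - snd (h t)) (fun t => fst (h t) ^ 2 + snd (h t) ^ 2)); auto.
    apply exR_opp; auto.
Qed.

Lemma DC_plus h1 h2 x : exC h1 x -> exC h2 x -> DC (fun t => (h1 t + h2 t)%C) x = (DC h1 x + DC h2 x)%C.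
Proof.
  intros [A B] [C D]. unfold DC; simpl.
  rewrite (Derive_plus (fun t => fst (h1 t)) (fun t => fst (h2 t))) by auto.
  rewrite (Derive_plus (fun t => snd (h1 t)) (fun t => snd (h2 t))) by auto. reflexivity.
Qed.

Lemma DC_opp h x : DC (fun t => (- h t)%C) x = (- DC h x)%C.
Proof.
  unfold DC; simpl. rewrite (Derive_opp (fun t => fst (h t))), (Derive_opp (fun t => snd (h t))). reflexivity.
Qed.

Lemma DC_minus h1 h2 x : exC h1 x -> exC h2 x -> DC (fun t => (h1 t - h2 t)%C) x = (DC h1 x - DC h2 x)%C.
Proof.
  intros. unfold Cminus. rewrite <- DC_opp. apply (DC_plus h1 (fun t => (- h2 t)%C)); auto. apply exC_opp; auto.
Qed.

Lemma DC_const c x : DC (fun _ => c) x = 0%C.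
Proof. unfold DC. rewrite !Derive_const. reflexivity. Qed.

Lemma DC_mult h1 h2 x : exC h1 x -> exC h2 x -> DC (fun t => (h1 t * h2 t)%C) x = (DC h1 x * h2 x + h1 x * DC h2 x)%C.
Proof.
  intros [A B] [C D]. unfold DC; simpl.
  rewrite (Derive_minus (fun t => fst (h1 t) * fst (h2 t)) (fun t => snd (h1 t) * snd (h2 t)))
    by (apply ex_derive_mult; auto).
  rewrite (Derive_plus (fun t => fst (h1 t) * snd (h2 t)) (fun t => snd (h1 t) * fst (h2 t)))
    by (apply ex_derive_mult; auto).
  rewrite !Derive_mult by auto.
  apply injective_projections; simpl; unfold Re, Im; ring.
Qed.

Lemma DC_inv h x : exC h x -> h x <> 0%C -> DC (fun t => (/ h t)%C) x = (- DC h x * (/ h x * / h x))%C.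
Proof.
  intros [A B] Hn. assert (Hd := C_neq0 _ Hn). unfold Re, Im in *.
  assert (Ed : ex_derive (fun t => fst (h t) ^ 2 + snd (h t) ^ 2) x).
  { apply exR_plus; apply ex_derive_pow; auto. }
  assert (Dd : Derive (fun t => fst (h t) ^ 2 + snd (h t) ^ 2) x =
     2 * fst (h x) * Derive (fun t => fst (h t)) x + 2 * snd (h x) * Derive (fun t => snd (h t)) x).
  { rewrite (Derive_plus (fun t => fst (h t) ^ 2) (fun t => snd (h t) ^ 2)) by (apply ex_derive_pow; auto).
    rewrite (Derive_pow (fun t => fst (h t))) by auto. rewrite (Derive_pow (fun t => snd (h t))) by auto.
    simpl. ring. }
  unfold DC; simpl.
  rewrite (Derive_div (fun t => fst (h t)) (fun t => fst (h t) ^ 2 + snd (h t) ^ 2)) by auto.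
  rewrite (Derive_div (fun t => - snd (h t)) (fun t => fst (h t) ^ 2 + snd (h t) ^ 2)) by (auto; apply exR_opp; auto).
  rewrite Dd. rewrite (Derive_opp (fun t => snd (h t))). unfold Re, Im.
  destruct (h x) as [a b]. simpl in *.
  assert (a * a + b * b <> 0) by (contradict Hd; lra).
  apply injective_projections; simpl; field; auto.
Qed.

Lemma DC_conj h x : DC (fun t => Cconj (h t)) x = Cconj (DC h x).
Proof. unfold DC, Cconj; simpl. rewrite (Derive_opp (fun t => snd (h t))). reflexivity. Qed.

Goal forall a b : C, (a * b + a = a * (b + 1))%C. intros. ring. Qed.

Definition C1C (Omega : C -> Prop) (F : C -> C) : Prop :=
  C1R Omega (fun w => Re (F w)) /\ C1R Omega (fun w => Im (F w)).

Definition wd (F : C -> C) (w : C) : Prop :=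
  exC (fun t => F (t, Im w)) (Re w) /\ exC (fun t => F (Re w, t)) (Im w).

Lemma C1C_wd Omega F w : C1C Omega F -> Omega w -> wd F w.
Proof.
  intros [H1 H2] Hw. destruct (H1 w Hw) as [A [B _]]. destruct (H2 w Hw) as [C [D _]].
  split; split; auto.
Qed.

Lemma wd_plus F G w : wd F w -> wd G w -> wd (fun z => (F z + G z)%C) w.
Proof. intros [A B] [C D]. split; apply (exC_plus (fun t => F _) (fun t => G _)); auto. Qed.
Lemma wd_minus F G w : wd F w -> wd G w -> wd (fun z => (F z - G z)%C) w.
Proof. intros [A B] [C D]. split; apply (exC_minus (fun t => F _) (fun t => G _)); auto. Qed.
Lemma wd_mult F G w : wd F w -> wd G w -> wd (fun z => (F z * G z)%C) w.
Proof. intros [A B] [C D]. split; apply (exC_mult (fun t => F _) (fun t => G _)); auto. Qed.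
Lemma wd_const c w : wd (fun _ => c) w.
Proof. split; apply exC_const. Qed.
Lemma wd_inv F w : wd F w -> F w <> 0%C -> wd (fun z => (/ F z)%C) w.
Proof. intros [A B] Hn. destruct w. split; apply (exC_inv (fun t => F _)); auto. Qed.

Lemma Dzb_plus F G w : wd F w -> wd G w -> Dzb (fun z => (F z + G z)%C) w = (Dzb F w + Dzb G w)%C.
Proof.
  intros [A B] [C D]. unfold Dzb. rewrite !Cpu_DC, !Cpv_DC.
  rewrite (DC_plus (fun t => F _) (fun t => G _)), (DC_plus (fun t => F _) (fun t => G _)) by auto. ring.
Qed.
Lemma Dzb_minus F G w : wd F w -> wd G w -> Dzb (fun z => (F z - G z)%C) w = (Dzb F w - Dzb G w)%C.
Proof.
  intros [A B] [C D]. unfold Dzb. rewrite !Cpu_DC, !Cpv_DC.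
  rewrite (DC_minus (fun t => F _) (fun t => G _)), (DC_minus (fun t => F _) (fun t => G _)) by auto. ring.
Qed.
Lemma Dzb_mult F G w : wd F w -> wd G w -> Dzb (fun z => (F z * G z)%C) w = (Dzb F w * G w + F w * Dzb G w)%C.
Proof.
  intros [A B] [C D]. unfold Dzb. rewrite !Cpu_DC, !Cpv_DC.
  rewrite (DC_mult (fun t => F _) (fun t => G _)), (DC_mult (fun t => F _) (fun t => G _)) by auto.
  destruct w; simpl. ring.
Qed.
Lemma Dzb_const c w : Dzb (fun _ => c) w = 0%C.
Proof. unfold Dzb. rewrite !Cpu_DC, !Cpv_DC, !DC_const. ring. Qed.
Lemma Dzb_inv F w : wd F w -> F w <> 0%C -> Dzb (fun z => (/ F z)%C) w = (- Dzb F w * (/ F w * / F w))%C.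
Proof.
  intros [A B] Hn. unfold Dzb. rewrite !Cpu_DC, !Cpv_DC. destruct w as [x y]. simpl in *.
  rewrite (DC_inv (fun t => F (t, y))), (DC_inv (fun t => F (x, t))) by auto. ring.
Qed.

Section CClos.
Variable Omega : C -> Prop.
Hypothesis Ho : open Omega.

Lemma C1C_ext_open F G : (forall w, Omega w -> F w = G w) -> C1C Omega F -> C1C Omega G.
Proof.
  intros H [H1 H2]. split.
  apply (C1R_ext_open Omega (fun w => Re (F w))); auto. intros w Hw; simpl; rewrite H; auto.
  apply (C1R_ext_open Omega (fun w => Im (F w))); auto. intros w Hw; simpl; rewrite H; auto.
Qed.

Lemma C1C_plus F G : C1C Omega F -> C1C Omega G -> C1C Omega (fun w => (F w + G w)%C).
Proof. intros [A B] [C D]. split.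
  apply (C1R_plus Omega Ho (fun w => Re (F w)) (fun w => Re (G w))); auto.
  apply (C1R_plus Omega Ho (fun w => Im (F w)) (fun w => Im (G w))); auto. Qed.
Lemma C1C_opp F : C1C Omega F -> C1C Omega (fun w => (- F w)%C).
Proof. intros [A B]. split.
  apply (C1R_opp Omega (fun w => Re (F w))); auto.
  apply (C1R_opp Omega (fun w => Im (F w))); auto. Qed.
Lemma C1C_minus F G : C1C Omega F -> C1C Omega G -> C1C Omega (fun w => (F w - G w)%C).
Proof. intros. apply C1C_plus; auto. apply C1C_opp; auto. Qed.
Lemma C1C_mult F G : C1C Omega F -> C1C Omega G -> C1C Omega (fun w => (F w * G w)%C).
Proof.
  intros [A B] [C D]. split.
  apply (C1R_minus Omega Ho (fun w => Re (F w) * Re (G w)) (fun w => Im (F w) * Im (G w)));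
    apply (C1R_mult Omega Ho); auto.
  apply (C1R_plus Omega Ho (fun w => Re (F w) * Im (G w)) (fun w => Im (F w) * Re (G w)));
    apply (C1R_mult Omega Ho); auto.
Qed.
Lemma C1C_const c : C1C Omega (fun _ => c).
Proof. split; apply C1R_const. Qed.
Lemma C1C_RC f : C1R Omega f -> C1C Omega (RC f).
Proof. intros H. split; simpl. auto. apply C1R_const. Qed.
Lemma C1C_inv F : C1C Omega F -> (forall w, Omega w -> F w <> 0%C) -> C1C Omega (fun w => (/ F w)%C).
Proof.
  intros [A B] Hn.
  assert (Hd : C1R Omega (fun w => / (Re (F w) * Re (F w) + Im (F w) * Im (F w)))).
  { apply (C1R_inv Omega Ho); auto.
    apply (C1R_plus Omega Ho (fun w => Re (F w) * Re (F w)) (fun w => Im (F w) * Im (F w)));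
      apply (C1R_mult Omega Ho); auto.
    intros w Hw. assert (H := C_neq0 _ (Hn w Hw)). contradict H. simpl. lra. }
  split.
  - apply (C1R_eq Omega (fun w => Re (F w) * / (Re (F w) * Re (F w) + Im (F w) * Im (F w)))).
    intros w. simpl. unfold Rdiv. f_equal. f_equal. unfold Re, Im. ring.
    apply (C1R_mult Omega Ho (fun w => Re (F w))); auto.
  - apply (C1R_eq Omega (fun w => - Im (F w) * / (Re (F w) * Re (F w) + Im (F w) * Im (F w)))).
    intros w. simpl. unfold Rdiv. f_equal. f_equal. unfold Re, Im. ring.
    apply (C1R_mult Omega Ho (fun w => - Im (F w))); auto. apply (C1R_opp Omega (fun w => Im (F w))); auto.
Qed.

Lemma C2C_iff F : C2C Omega F <-> C1C Omega F /\ C1C Omega (Cpu F) /\ C1C Omega (Cpv F).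
Proof.
  unfold C2C, C1C. rewrite !C2R_iff.
  change (fun w => Re (Cpu F w)) with (pu (fun w => Re (F w))).
  change (fun w => Im (Cpu F w)) with (pu (fun w => Im (F w))).
  change (fun w => Re (Cpv F w)) with (pv (fun w => Re (F w))).
  change (fun w => Im (Cpv F w)) with (pv (fun w => Im (F w))).
  tauto.
Qed.

Lemma C2C_C1C F : C2C Omega F -> C1C Omega F.
Proof. rewrite C2C_iff. tauto. Qed.

Lemma C2C_plus F G : C2C Omega F -> C2C Omega G -> C2C Omega (fun w => (F w + G w)%C).
Proof.
  rewrite !C2C_iff. intros [F1 [F2 F3]] [G1 [G2 G3]]. split; [|split].
  - apply C1C_plus; auto.
  - apply (C1C_ext_open (fun w => Cpu F w + Cpu G w)%C).
    intros w Hw. rewrite !Cpu_DC. symmetry. apply (DC_plus (fun t => F _) (fun t => G _));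
      [apply (proj1 (C1C_wd _ _ w F1 Hw))|apply (proj1 (C1C_wd _ _ w G1 Hw))].
    apply C1C_plus; auto.
  - apply (C1C_ext_open (fun w => Cpv F w + Cpv G w)%C).
    intros w Hw. rewrite !Cpv_DC. symmetry. apply (DC_plus (fun t => F _) (fun t => G _));
      [apply (proj2 (C1C_wd _ _ w F1 Hw))|apply (proj2 (C1C_wd _ _ w G1 Hw))].
    apply C1C_plus; auto.
Qed.

Lemma C2C_mult F G : C2C Omega F -> C2C Omega G -> C2C Omega (fun w => (F w * G w)%C).
Proof.
  rewrite !C2C_iff. intros [F1 [F2 F3]] [G1 [G2 G3]]. split; [|split].
  - apply C1C_mult; auto.
  - apply (C1C_ext_open (fun w => Cpu F w * G w + F w * Cpu G w)%C).
    intros w Hw. rewrite !Cpu_DC. symmetry. destruct w as [x y]. apply (DC_mult (fun t => F _) (fun t => G _));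
      [apply (proj1 (C1C_wd _ _ _ F1 Hw))|apply (proj1 (C1C_wd _ _ _ G1 Hw))].
    apply C1C_plus; apply C1C_mult; auto.
  - apply (C1C_ext_open (fun w => Cpv F w * G w + F w * Cpv G w)%C).
    intros w Hw. rewrite !Cpv_DC. symmetry. destruct w as [x y]. apply (DC_mult (fun t => F _) (fun t => G _));
      [apply (proj2 (C1C_wd _ _ _ F1 Hw))|apply (proj2 (C1C_wd _ _ _ G1 Hw))].
    apply C1C_plus; apply C1C_mult; auto.
Qed.

Lemma C2C_const c : C2C Omega (fun _ => c).
Proof.
  rewrite C2C_iff. split; [|split]; [apply C1C_const| |].
  apply (C1C_ext_open (fun _ => 0%C)). intros w _. rewrite Cpu_DC, DC_const. auto. apply C1C_const.
  apply (C1C_ext_open (fun _ => 0%C)). intros w _. rewrite Cpv_DC, DC_const. auto. apply C1C_const.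
Qed.

Lemma C2C_inv F : C2C Omega F -> (forall w, Omega w -> F w <> 0%C) -> C2C Omega (fun w => (/ F w)%C).
Proof.
  rewrite !C2C_iff. intros [F1 [F2 F3]] Hn. split; [|split].
  - apply C1C_inv; auto.
  - apply (C1C_ext_open (fun w => - Cpu F w * (/ F w * / F w))%C).
    intros w Hw. rewrite !Cpu_DC. symmetry. destruct w as [x y].
    apply (DC_inv (fun t => F (t, y))). apply (proj1 (C1C_wd _ _ _ F1 Hw)). apply Hn; auto.
    apply C1C_mult. apply C1C_opp; auto. apply C1C_mult; apply C1C_inv; auto.
  - apply (C1C_ext_open (fun w => - Cpv F w * (/ F w * / F w))%C).
    intros w Hw. rewrite !Cpv_DC. symmetry. destruct w as [x y].
    apply (DC_inv (fun t => F (x, t))). apply (proj2 (C1C_wd _ _ _ F1 Hw)). apply Hn; auto.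
    apply C1C_mult. apply C1C_opp; auto. apply C1C_mult; apply C1C_inv; auto.
Qed.

End CClos.

Lemma pu_scal (k : R) f z : pu (fun w => k * f w) z = k * pu f z.
Proof. unfold pu. apply (Derive_scal (fun t => f (t, Im z))). Qed.
Lemma pv_scal (k : R) f z : pv (fun w => k * f w) z = k * pv f z.
Proof. unfold pv. apply (Derive_scal (fun t => f (Re z, t))). Qed.

Lemma Dz_RC_fun f : Dz (RC f) = fun w => ((/ 2 * pu f w), (- / 2 * pv f w)).
Proof.
  apply functional_extensionality. intros w. unfold Dz, Cpu, Cpv.
  change (pu (fun w0 => Re (RC f w0)) w) with (pu f w).
  change (pv (fun w0 => Re (RC f w0)) w) with (pv f w).
  change (pu (fun w0 => Im (RC f w0)) w) with (pu (fun _ => 0) w).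
  change (pv (fun w0 => Im (RC f w0)) w) with (pv (fun _ => 0) w).
  rewrite pu_const, pv_const. apply injective_projections; simpl; field.
Qed.

Lemma Dzb_RC_fun f : Dzb (RC f) = fun w => ((/ 2 * pu f w), (/ 2 * pv f w)).
Proof.
  apply functional_extensionality. intros w. unfold Dzb, Cpu, Cpv.
  change (pu (fun w0 => Re (RC f w0)) w) with (pu f w).
  change (pv (fun w0 => Re (RC f w0)) w) with (pv f w).
  change (pu (fun w0 => Im (RC f w0)) w) with (pu (fun _ => 0) w).
  change (pv (fun w0 => Im (RC f w0)) w) with (pv (fun _ => 0) w).
  rewrite pu_const, pv_const. apply injective_projections; simpl; field.
Qed.

Lemma Dzb_Dz_RC f z : Dzb (Dz (RC f)) z =
  (/ 4 * (pu (pu f) z + pv (pv f) z), / 4 * (pv (pu f) z - pu (pv f) z)).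
Proof.
  rewrite Dz_RC_fun. unfold Dzb, Cpu, Cpv. simpl.
  rewrite (pu_scal (/2) (pu f)), (pu_scal (- / 2) (pv f)), (pv_scal (/2) (pu f)), (pv_scal (- /2) (pv f)).
  apply injective_projections; simpl; field.
Qed.

Lemma Dz_Dzb_RC f z : Dz (Dzb (RC f)) z =
  (/ 4 * (pu (pu f) z + pv (pv f) z), / 4 * (pu (pv f) z - pv (pu f) z)).
Proof.
  rewrite Dzb_RC_fun. unfold Dz, Cpu, Cpv. simpl.
  rewrite (pu_scal (/2) (pu f)), (pu_scal (/ 2) (pv f)), (pv_scal (/2) (pu f)), (pv_scal (/2) (pv f)).
  apply injective_projections; simpl; field.
Qed.

Lemma schwarz_C Omega f z : open Omega -> C2R Omega f -> Omega z -> pu (pv f) z = pv (pu f) z.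
Proof.
  intros Ho Hf Hz. destruct z as [x y].
  assert (Hl : locally_2d (fun u v => Omega (u, v)) x y).
  { apply locally_2d_locally. generalize (Ho _ Hz). apply filter_imp. intros [u v]; auto. }
  destruct (Hf _ Hz) as [_ [_ [_ [_ [_ [_ [_ [_ [_ [_ [C1 [C2 _]]]]]]]]]]]].
  unfold pu, pv. simpl.
  apply (Schwarz (fun u v => f (u, v)) x y).
  - generalize Hl. apply locally_2d_impl. apply locally_2d_forall. intros u v Huv.
    destruct (Hf _ Huv) as [E1 [E2 [E3 [E4 [E5 [E6 _]]]]]]. simpl in *. repeat split; auto.
  - apply (continuous_2d_pt (pu (pv f)) x y). auto.
  - apply (continuous_2d_pt (pv (pu f)) x y). auto.
Qed.

Lemma sq2_neq0 (x y : R) : ((x, y) : C) <> 0%C -> x * x + y * y <> 0.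
Proof. intros H E. apply H. assert (x = 0) by nra. assert (y = 0) by nra. subst; reflexivity. Qed.

Lemma Cmod2 (w : C) : Cmod w ^ 2 = Re w * Re w + Im w * Im w.
Proof. unfold Cmod. rewrite pow2_sqrt. unfold Re, Im; ring. apply Rplus_le_le_0_compat; apply pow2_ge_0. Qed.

Lemma Im_Dzb F z : Im (Dzb F z) = / 2 * (pu (fun w => Im (F w)) z + pv (fun w => Re (F w)) z).
Proof. unfold Dzb, Cpu, Cpv. simpl. field. Qed.

Lemma alg_lap (x y q0 lam : R) : x * x + y * y <> 0 -> (1 - lam * y) * (1 - lam * y) + (lam * x) * (lam * x) <> 0 ->
  let g := ((x, y) : C) in let q := ((q0, 0) : C) in let gl := (g / (1 + Ci * RtoC lam * g))%C in
  (RtoC (x * x + y * y) * q = RtoC (Re gl * Re gl + Im gl * Im gl) *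
   ((/ g + Ci * RtoC lam) * (g * q - Ci * RtoC lam * (RtoC (x * x + y * y) * q))))%C.
Proof.
  intros H1 H2. simpl. apply injective_projections; simpl; field; split; auto; lra.
Qed.
Lemma alg_nd (x y p1 p2 q1 q2 lam : R) : x * x + y * y <> 0 -> (1 - lam * y) * (1 - lam * y) + (lam * x) * (lam * x) <> 0 ->
  let g := ((x, y) : C) in let gl := (g / (1 + Ci * RtoC lam * g))%C in
  let Pz := ((p1, p2) : C) in let Qz := ((q1, q2) : C) in
  (Pz - RtoC (x * x + y * y) * Qz = (Pz - RtoC (Re gl * Re gl + Im gl * Im gl) *
   ((/ g + Ci * RtoC lam) * (g * Qz - Ci * RtoC lam * Pz))) * (((1 - lam * y)%R, (- (lam * x))%R) : C))%C.
Proof.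
  intros H1 H2. simpl. apply injective_projections; simpl; field; split; auto; lra.
Qed.

Section Main.
Variables (Omega : C -> Prop) (g : C -> C) (P Q : C -> R) (lam : R).
Hypothesis Ho : open Omega.
Hypothesis Hg : C2C Omega g.
Hypothesis HPc : C2R Omega P.
Hypothesis HQc : C2R Omega Q.
Hypothesis Hgn : forall z, Omega z -> g z <> 0%C.
Hypothesis Hhol : forall z, Omega z -> Dzb g z = 0%C.
Hypothesis Hlap : forall z, Omega z -> Dz (Dzb (RC P)) z = (RtoC (Cmod (g z) ^ 2) * Dz (Dzb (RC Q)) z)%C.

Definition Fl (z : C) : C :=
  ((/ g z + Ci * RtoC lam) * (g z * Dz (RC Q) z - Ci * RtoC lam * Dz (RC P) z))%C.

Lemma C1C_Dz_RC f : C2R Omega f -> C1C Omega (Dz (RC f)).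
Proof.
  intros Hf. apply C2R_iff in Hf. destruct Hf as [_ [H1 H2]]. rewrite Dz_RC_fun. split; simpl.
  apply (C1R_mult Omega Ho (fun _ => / 2) (pu f)). apply C1R_const. auto.
  apply (C1R_mult Omega Ho (fun _ => - / 2) (pv f)). apply C1R_const. auto.
Qed.

Lemma C1C_Fl : C1C Omega Fl.
Proof.
  assert (G1 := C2C_C1C Omega g Hg).
  unfold Fl. apply (C1C_mult Omega Ho (fun z => / g z + Ci * RtoC lam)%C (fun z => g z * Dz (RC Q) z - Ci * RtoC lam * Dz (RC P) z)%C).
  - apply (C1C_plus Omega Ho (fun z => / g z)%C (fun _ => Ci * RtoC lam)%C).
    apply C1C_inv; auto. apply C1C_const.
  - apply (C1C_minus Omega Ho (fun z => g z * Dz (RC Q) z)%C (fun z => Ci * RtoC lam * Dz (RC P) z)%C).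
    apply C1C_mult; auto. apply C1C_Dz_RC; auto.
    apply (C1C_mult Omega Ho (fun _ => Ci * RtoC lam)%C). apply C1C_const. apply C1C_Dz_RC; auto.
Qed.

Lemma Dzb_Fl z : Omega z -> Dzb Fl z =
  ((/ g z + Ci * RtoC lam) * (g z * Dzb (Dz (RC Q)) z - Ci * RtoC lam * Dzb (Dz (RC P)) z))%C.
Proof.
  intros Hz.
  assert (G1 := C1C_wd _ _ _ (C2C_C1C Omega g Hg) Hz).
  assert (WQ := C1C_wd _ _ _ (C1C_Dz_RC Q HQc) Hz).
  assert (WP := C1C_wd _ _ _ (C1C_Dz_RC P HPc) Hz).
  assert (Wi := wd_inv g z G1 (Hgn z Hz)).
  unfold Fl.
  rewrite (Dzb_mult (fun z => / g z + Ci * RtoC lam)%C (fun z => g z * Dz (RC Q) z - Ci * RtoC lam * Dz (RC P) z)%C).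
  rewrite (Dzb_plus (fun z => / g z)%C (fun _ => Ci * RtoC lam)%C) by (auto; apply wd_const).
  rewrite (Dzb_inv g) by auto. rewrite Hhol by auto. rewrite Dzb_const.
  rewrite (Dzb_minus (fun z => g z * Dz (RC Q) z)%C (fun z => Ci * RtoC lam * Dz (RC P) z)%C).
  rewrite (Dzb_mult g (Dz (RC Q))) by auto. rewrite (Dzb_mult (fun _ => Ci * RtoC lam)%C (Dz (RC P))) by (auto; apply wd_const).
  rewrite Hhol, Dzb_const by auto. ring.
  apply wd_mult; auto. apply wd_mult; auto; apply wd_const.
  apply wd_plus; auto; apply wd_const.
  apply wd_minus; apply wd_mult; auto; apply wd_const.
Qed.

Definition qz (z : C) : C := Dz (Dzb (RC Q)) z.

Lemma qz_real z : Omega z -> Im (qz z) = 0.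
Proof. intros Hz. unfold qz. rewrite Dz_Dzb_RC. simpl. rewrite (schwarz_C Omega Q z); auto. ring. Qed.

Lemma Dzb_Fl_val z : Omega z -> Dzb Fl z =
  ((/ g z + Ci * RtoC lam) * (g z * qz z - Ci * RtoC lam * (RtoC (Cmod (g z) ^ 2) * qz z)))%C.
Proof.
  intros Hz. rewrite Dzb_Fl by auto. unfold qz. rewrite <- Hlap by auto.
  assert (E : forall f, C2R Omega f -> Dzb (Dz (RC f)) z = Dz (Dzb (RC f)) z).
  { intros f Hf. rewrite Dzb_Dz_RC, Dz_Dzb_RC. rewrite (schwarz_C Omega f z); auto. }
  rewrite !E; auto.
Qed.

Lemma Dzb_Fl_real z : Omega z -> Im (Dzb Fl z) = 0.
Proof.
  intros Hz. rewrite Dzb_Fl_val by auto. assert (Hq := qz_real z Hz). assert (Hn := Hgn z Hz).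
  rewrite Cmod2. destruct (g z) as [x y]. destruct (qz z) as [q0 q1]. simpl in Hq. subst q1.
  assert (H2 := sq2_neq0 x y Hn). simpl. field. auto.
Qed.

Definition aF (w : C) : R := 2 * Re (Fl w).
Definition bF (w : C) : R := - 2 * Im (Fl w).

Lemma C1R_aF : C1R Omega aF.
Proof. apply (C1R_mult Omega Ho (fun _ => 2) (fun w => Re (Fl w))). apply C1R_const. apply C1C_Fl. Qed.
Lemma C1R_bF : C1R Omega bF.
Proof. apply (C1R_mult Omega Ho (fun _ => -2) (fun w => Im (Fl w))). apply C1R_const. apply C1C_Fl. Qed.

Lemma HP_F : HPab Omega aF bF.
Proof.
  intros z Hz. destruct (C1R_aF z Hz) as [A1 [A2 [A3 [A4 A5]]]].
  destruct (C1R_bF z Hz) as [B1 [B2 [B3 [B4 B5]]]].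
  split; [auto|split;[auto|split;[auto|split;[auto|]]]].
  replace (pu bF z) with (pv aF z). apply Derive_correct. auto.
  unfold aF, bF. rewrite (pv_scal 2 (fun w => Re (Fl w))), (pu_scal (-2) (fun w => Im (Fl w))).
  assert (H := Dzb_Fl_real z Hz). rewrite Im_Dzb in H. lra.
Qed.

Lemma part1 : simply_connected Omega -> exists Ql, C2R Omega Ql /\ forall z, Omega z -> Dz (RC Ql) z = Fl z.
Proof.
  intros HSC. destruct (poincare Omega aF bF HP_F HSC) as [f Hf].
  exists f.
  assert (Pu : forall w, Omega w -> aF w = pu f w) by (intros; symmetry; unfold pu; apply is_derive_unique; apply Hf; auto).
  assert (Pv : forall w, Omega w -> bF w = pv f w) by (intros; symmetry; unfold pv; apply is_derive_unique; apply Hf; auto).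
  split.
  - apply C2R_iff. split; [|split].
    + intros z Hz. destruct (Hf z Hz) as [D1 [D2 D3]].
      split. exists (aF z); auto. split. exists (bF z); auto. split; auto. split.
      apply (cont_ext_open Omega aF (pu f) z Ho Hz); auto. apply C1R_aF; auto.
      apply (cont_ext_open Omega bF (pv f) z Ho Hz); auto. apply C1R_bF; auto.
    + apply (C1R_ext_open Omega aF (pu f) Ho); auto. apply C1R_aF.
    + apply (C1R_ext_open Omega bF (pv f) Ho); auto. apply C1R_bF.
  - intros z Hz. rewrite Dz_RC_fun. rewrite <- Pu, <- Pv by auto. unfold aF, bF.
    destruct (Fl z); apply injective_projections; simpl; field.
Qed.

Lemma Dz_ext_open (G1 G2 : C -> C) z : Omega z -> (forall w, Omega w -> G1 w = G2 w) -> Dz G1 z = Dz G2 z.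
Proof.
  intros Hz H. unfold Dz, Cpu, Cpv.
  rewrite (pu_ext_open Omega (fun w => Re (G1 w)) (fun w => Re (G2 w)) Ho) by (auto; intros; rewrite H; auto).
  rewrite (pu_ext_open Omega (fun w => Im (G1 w)) (fun w => Im (G2 w)) Ho) by (auto; intros; rewrite H; auto).
  rewrite (pv_ext_open Omega (fun w => Re (G1 w)) (fun w => Re (G2 w)) Ho) by (auto; intros; rewrite H; auto).
  rewrite (pv_ext_open Omega (fun w => Im (G1 w)) (fun w => Im (G2 w)) Ho) by (auto; intros; rewrite H; auto).
  reflexivity.
Qed.

Lemma Dz_conj F z : Dz (fun w => Cconj (F w)) z = Cconj (Dzb F z).
Proof.
  unfold Dz, Dzb. rewrite !Cpu_DC, !Cpv_DC.
  rewrite (DC_conj (fun t => F (t, Im z))), (DC_conj (fun t => F (Re z, t))).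
  destruct (DC (fun t => F (t, Im z)) (Re z)), (DC (fun t => F (Re z, t)) (Im z)).
  apply injective_projections; simpl; field.
Qed.

Lemma Dzb_RC_conj f w : Dzb (RC f) w = Cconj (Dz (RC f) w).
Proof. rewrite Dzb_RC_fun, Dz_RC_fun. unfold Cconj. apply injective_projections; simpl; ring. Qed.

Hypothesis Hd : forall z, Omega z -> (1 + Ci * RtoC lam * g z)%C <> 0%C.
Hypothesis Hnd : forall z, Omega z -> (Dz (RC P) z - RtoC (Cmod (g z) ^ 2) * Dz (RC Q) z)%C <> 0%C.

Lemma part2 Ql : C2R Omega Ql -> (forall z, Omega z -> Dz (RC Ql) z = Fl z) ->
  WD1 Omega (fun z => (g z / (1 + Ci * RtoC lam * g z))%C) P Ql.
Proof.
  intros HQl HF. split; [|split; [auto|split; [auto|]]].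
  - change (C2C Omega (fun z => (g z * / (1 + Ci * RtoC lam * g z))%C)).
    apply (C2C_mult Omega Ho g); auto. apply C2C_inv; auto.
    apply (C2C_plus Omega Ho (fun _ => 1%C) (fun z => (Ci * RtoC lam * g z)%C)).
    apply C2C_const; auto. apply (C2C_mult Omega Ho (fun _ => (Ci * RtoC lam)%C) g); auto. apply C2C_const; auto.
  - intros z Hz.
    assert (Hgz := Hgn z Hz). assert (Hdz := Hd z Hz).
    assert (G1 := C1C_wd _ _ _ (C2C_C1C Omega g Hg) Hz).
    split; [|split; [|split]].
    + intros E. apply Hgz. change ((g z * / (1 + Ci * RtoC lam * g z))%C = 0%C) in E.
      replace (g z) with ((g z * / (1 + Ci * RtoC lam * g z)) * (1 + Ci * RtoC lam * g z))%C by (field; auto).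
      rewrite E. ring.
    + change (Dzb (fun z => (g z * / (1 + Ci * RtoC lam * g z))%C) z = 0%C).
      assert (Wd : wd (fun z => (1 + Ci * RtoC lam * g z)%C) z).
      { apply (wd_plus (fun _ => 1%C) (fun z => (Ci * RtoC lam * g z)%C)). apply wd_const.
        apply (wd_mult (fun _ => (Ci * RtoC lam)%C) g). apply wd_const. auto. }
      rewrite (Dzb_mult g (fun z => / (1 + Ci * RtoC lam * g z))%C); auto.
      rewrite (Dzb_inv (fun z => (1 + Ci * RtoC lam * g z))%C); auto.
      rewrite (Dzb_plus (fun _ => 1%C) (fun z => (Ci * RtoC lam * g z)%C)).
      rewrite (Dzb_mult (fun _ => (Ci * RtoC lam)%C) g). rewrite !Dzb_const, Hhol by auto. ring.
      apply wd_const. auto. apply wd_const. apply (wd_mult (fun _ => (Ci * RtoC lam)%C) g). apply wd_const. auto.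
      apply (wd_inv (fun z => (1 + Ci * RtoC lam * g z))%C); auto.
    + rewrite Hlap by auto.
      rewrite (Dz_ext_open (Dzb (RC Ql)) (fun w => Cconj (Fl w))) by (auto; intros w Hw; rewrite Dzb_RC_conj, HF; auto).
      rewrite Dz_conj. rewrite Dzb_Fl_val by auto. fold (qz z).
      assert (Hq := qz_real z Hz).
      rewrite !Cmod2. destruct (g z) as [x y]. destruct (qz z) as [q0 q1]. simpl in Hq. subst q1.
      assert (H1 := sq2_neq0 x y Hgz).
      assert (H2 : (1 - lam * y) * (1 - lam * y) + (lam * x) * (lam * x) <> 0).
      { assert (H3 := C_neq0 _ Hdz). simpl in H3. contradict H3. simpl. lra. }
      assert (E := alg_lap x y q0 lam H1 H2). simpl in E. simpl. rewrite E at 1.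
      apply injective_projections; simpl; field; split; auto; lra.
    + rewrite HF by auto. assert (Hn := Hnd z Hz). unfold Fl. intros E. apply Hn. clear Hn.
      rewrite !Cmod2. rewrite Cmod2 in E. destruct (g z) as [x y].
      destruct (Dz (RC P) z) as [p1 p2]. destruct (Dz (RC Q) z) as [q1 q2].
      assert (H1 := sq2_neq0 x y Hgz).
      assert (H2 : (1 - lam * y) * (1 - lam * y) + (lam * x) * (lam * x) <> 0).
      { assert (H3 := C_neq0 _ Hdz). simpl in H3. contradict H3. simpl. lra. }
      assert (A := alg_nd x y p1 p2 q1 q2 lam H1 H2). simpl in A. simpl in E. simpl.
      rewrite A. rewrite E. apply injective_projections; simpl; ring.
Qed.

End Main.

Theorem mainTheorem3 (Omega : C -> Prop) (g : C -> C) (P Q : C -> R) (lam : R) :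
  simply_connected Omega ->
  WD1 Omega g P Q ->
  (forall z, Omega z -> (1 + Ci * RtoC lam * g z)%C <> 0%C) ->
  (exists Ql : C -> R, C2R Omega Ql /\
     forall z, Omega z ->
       Dz (RC Ql) z =
       ((/ g z + Ci * RtoC lam) *
        (g z * Dz (RC Q) z - Ci * RtoC lam * Dz (RC P) z))%C) /\
  (forall Ql : C -> R, C2R Omega Ql ->
     (forall z, Omega z ->
       Dz (RC Ql) z =
       ((/ g z + Ci * RtoC lam) *
        (g z * Dz (RC Q) z - Ci * RtoC lam * Dz (RC P) z))%C) ->
     WD1 Omega (fun z => (g z / (1 + Ci * RtoC lam * g z))%C) P Ql).
Proof.
  intros HSC HWD Hd.
  assert (Ho : open Omega) by (destruct HSC as [[Ho _] _]; exact Ho).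
  destruct HWD as [Hg [HPc [HQc Hz]]].
  assert (Hgn : forall z, Omega z -> g z <> 0%C) by (intros z H; apply (Hz z H)).
  assert (Hhol : forall z, Omega z -> Dzb g z = 0%C) by (intros z H; apply (Hz z H)).
  assert (Hlap : forall z, Omega z -> Dz (Dzb (RC P)) z = (RtoC (Cmod (g z) ^ 2) * Dz (Dzb (RC Q)) z)%C)
    by (intros z H; apply (Hz z H)).
  assert (Hnd : forall z, Omega z -> (Dz (RC P) z - RtoC (Cmod (g z) ^ 2) * Dz (RC Q) z)%C <> 0%C)
    by (intros z H; apply (Hz z H)).
  split.
  - destruct (part1 Omega g P Q lam Ho Hg HPc HQc Hgn Hhol Hlap HSC) as [Ql [H1 H2]].
    exists Ql. split; auto.
  - intros Ql HQl HF. apply (part2 Omega g P Q lam Ho Hg HPc HQc Hgn Hhol Hlap Hd Hnd Ql HQl HF).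
Qed.
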